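(* Let $D\in\{D_1,D_2,\dots,D_8\}$. For every positive integer $v$ with $v\equiv 8\pmod{14}$, there exists a $D$-decomposition of $K^*_v$.
   Context: $K^*_v$ denotes the complete symmetric digraph of order $v$: it contains both arcs $(x,y)$ and $(y,x)$ for every pair of distinct vertices $x,y$. A $D$-decomposition of a digraph $K$ is a set of subdigraphs of $K$, each isomorphic to $D$, such that every arc of $K$ lies in exactly one of them. For distinct vertices $v_0,\dots,v_6$, the digraphs $D_i[v_0,v_1,\dots,v_6]$ ($i\in[1,8]$) all have vertex set $\{v_0,\dots,v_6\}$ and the following arc sets: $D_1$: $(v_1,v_0),(v_1,v_2),(v_2,v_3),(v_3,v_4),(v_4,v_5),(v_5,v_6),(v_6,v_0)$; $D_2$: $(v_1,v_0),(v_2,v_1),(v_2,v_3),(v_3,v_4),(v_4,v_5),(v_5,v_6),(v_6,v_0)$; $D_3$: $(v_1,v_0),(v_1,v_2),(v_3,v_2),(v_3,v_4),(v_4,v_5),(v_5,v_6),(v_6,v_0)$; $D_4$: $(v_1,v_0),(v_1,v_2),(v_2,v_3),(v_4,v_3),(v_4,v_5),(v_5,v_6),(v_6,v_0)$; $D_5$: $(v_1,v_0),(v_2,v_1),(v_3,v_2),(v_3,v_4),(v_4,v_5),(v_5,v_6),(v_6,v_0)$; $D_6$: $(v_1,v_0),(v_2,v_1),(v_2,v_3),(v_3,v_4),(v_5,v_4),(v_5,v_6),(v_6,v_0)$; $D_7$: $(v_1,v_0),(v_1,v_2),(v_3,v_2),(v_3,v_4),(v_4,v_5),(v_6,v_5),(v_6,v_0)$;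 $D_8$: $(v_1,v_0),(v_2,v_1),(v_2,v_3),(v_4,v_3),(v_4,v_5),(v_5,v_6),(v_6,v_0)$. $D_i$ also denotes the isomorphism type of $D_i[v_0,\dots,v_6]$. *)

(* Defs.v *)
From mathcomp Require Import all_boot.
Set Implicit Arguments. Unset Strict Implicit. Unset Printing Implicit Defensive.

(* Arc lists of the digraphs D_1..D_8 on vertices v_0..v_6, given by the
   indices (a,b) meaning the arc (v_a, v_b). *)
Definition Darcs (i : nat) : seq (nat * nat) :=
  match i with
  | 1 => [:: (1,0); (1,2); (2,3); (3,4); (4,5); (5,6); (6,0)]
  | 2 => [:: (1,0); (2,1); (2,3); (3,4); (4,5); (5,6); (6,0)]
  | 3 => [:: (1,0); (1,2); (3,2); (3,4); (4,5); (5,6); (6,0)]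
  | 4 => [:: (1,0); (1,2); (2,3); (4,3); (4,5); (5,6); (6,0)]
  | 5 => [:: (1,0); (2,1); (3,2); (3,4); (4,5); (5,6); (6,0)]
  | 6 => [:: (1,0); (2,1); (2,3); (3,4); (5,4); (5,6); (6,0)]
  | 7 => [:: (1,0); (1,2); (3,2); (3,4); (4,5); (6,5); (6,0)]
  | 8 => [:: (1,0); (2,1); (2,3); (4,3); (4,5); (5,6); (6,0)]
  | _ => [::]
  end.

(* K*_v has vertex set 'I_v and all arcs (x,y), x <> y.
   A copy D[t_0,...,t_6] of D (with arc list A) in K*_v is given by a
   7-tuple t of pairwise distinct vertices; its arc set is: *)
Definition copy_arcs (v : nat) (A : seq (nat * nat)) (t : 7.-tuple 'I_v)
  : seq ('I_v * 'I_v) :=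
  [seq (tnth t (inord a.1), tnth t (inord a.2)) | a <- A].

Definition has_decomposition (A : seq (nat * nat)) (v : nat) : Prop :=
  exists s : seq (7.-tuple 'I_v),
    (forall t, t \in s -> uniq t) /\
    (forall x y : 'I_v, x != y ->
        count (fun t => (x, y) \in copy_arcs A t) s = 1).

(* Main.v *)
Require Import Defs.
From mathcomp Require Import all_boot.
From mathcomp Require Import zify.
Set Implicit Arguments. Unset Strict Implicit. Unset Printing Implicit Defensive.


Definition key (n u w : nat) : nat * nat * nat :=
  (u %/ n, w %/ n, (w %% n + n - u %% n) %% n).
Definition trv (n z u : nat) : nat := (u %% n + z) %% n + u %/ n * n.

Lemma count_false (T : Type) (s : seq T) : count (fun _ => false) s = 0.
Proof. by elim: s. Qed.

Lemma count_iota_eq (z0 n : nat) (b : bool) : z0 < n ->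
  count (fun z => (z == z0) && b) (iota 0 n) = b.
Proof.
move=> hz; case: b.
- under eq_count => z do rewrite andbT.
  by rewrite (count_uniq_mem _ (iota_uniq 0 n)) mem_iota add0n hz.
- by under eq_count => z do rewrite andbF; rewrite count_false.
Qed.

Lemma modz_char (n a c z : nat) : a < n -> c < n -> z < n ->
  ((a + z) %% n == c) = (z == (c + n - a) %% n).
Proof.
move=> ha hc hz.
have h1 : (a + (c + n - a) %% n) %% n = c.
  by rewrite modnDmr (_ : a + (c + n - a) = c + n) ?modnDr ?modn_small //; lia.
rewrite -{1}h1 eqn_modDl modn_small //.
by rewrite modn_small // ltn_pmod //; lia.
Qed.

Lemma SL (n a b c e : nat) : a < n -> b < n -> c < n -> e < n ->
  count (fun z => ((a + z) %% n == c) && ((b + z) %% n == e)) (iota 0 n)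
  = ((b + n - a) %% n == (e + n - c) %% n).
Proof.
move=> ha hb hc he.
have n0 : 0 < n by lia.
set z0 := (c + n - a) %% n.
have hz0 : z0 < n by rewrite ltn_pmod.
transitivity ((b + z0) %% n == e).
  rewrite -(count_iota_eq _ hz0); apply: eq_in_count.
  move=> z; rewrite mem_iota => /andP [_ hz].
  by rewrite modz_char //; case: eqP => [->|].
have -> : (b + z0) %% n = ((b + n - a) + c) %% n.
  by rewrite modnDmr; congr (_ %% n); lia.
have he' : e = ((e + n - c) + c) %% n.
  by rewrite (_ : e + n - c + c = e + n) ?modnDr ?modn_small //; lia.
by rewrite {1}he' eqn_modDr.
Qed.

Lemma eq_dm (n a b c d : nat) : a < n -> c < n ->
  (a + b * n == c + d * n) = (a == c) && (b == d).
Proof.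
move=> ha hc; apply/eqP/andP => [h|[/eqP-> /eqP->]//].
have n0 : 0 < n by lia.
have hb : (a + b * n) %/ n = b by rewrite addnC divnMDl // divn_small // addn0.
have hd : (c + d * n) %/ n = d by rewrite addnC divnMDl // divn_small // addn0.
have ebd : b = d by rewrite -hb -hd h.
by subst; split => //; apply/eqP; lia.
Qed.

Lemma trv_eq (n z u x : nat) : 0 < n ->
  (trv n z u == x) = ((u %% n + z) %% n == x %% n) && (u %/ n == x %/ n).
Proof.
move=> n0; rewrite /trv {1}(divn_eq x n) [x %/ n * n + _]addnC eq_dm //;
 by rewrite ltn_pmod.
Qed.

Lemma KL (n u w x y : nat) : 0 < n ->
  count (fun z => (trv n z u == x) && (trv n z w == y)) (iota 0 n)
  = (key n u w == key n x y).
Proof.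
move=> n0.
have E : forall z, (trv n z u == x) && (trv n z w == y) =
  (((u %% n + z) %% n == x %% n) && ((w %% n + z) %% n == y %% n))
   && ((u %/ n == x %/ n) && (w %/ n == y %/ n)).
  by move=> z; rewrite !trv_eq // andbACA.
under eq_count => z do rewrite E.
rewrite /key !xpair_eqE.
case: ((u %/ n == x %/ n) && (w %/ n == y %/ n)).
- under eq_count => z do rewrite andbT.
  by rewrite SL ?ltn_pmod.
- by under eq_count => z do rewrite andbF; rewrite count_false.
Qed.

Definition mkt (m : nat) (b : seq nat) : 7.-tuple 'I_m.+1 :=
  [tuple (inord (nth 0 b i) : 'I_m.+1) | i < 7].

Lemma trv_lt (n z u : nat) : 0 < n -> u < n + n -> trv n z u < n + n.
Proof.
move=> n0 hu; rewrite /trv.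
have h1 : u %/ n < 2 by rewrite ltn_divLR //; lia.
have h2 : (u %% n + z) %% n < n by rewrite ltn_pmod.
by case: (u %/ n) h1 => [|[|]] //= _; lia.
Qed.

Lemma trv_mod (n z u : nat) : 0 < n -> trv n z u %% n = (u %% n + z) %% n.
Proof. by move=> n0; rewrite /trv addnC modnMDl modn_mod. Qed.

Lemma trv_div (n z u : nat) : 0 < n -> trv n z u %/ n = u %/ n.
Proof.
move=> n0; rewrite /trv addnC divnMDl // (divn_small (ltn_pmod _ n0)).
by rewrite addn0.
Qed.

Lemma trv_inj (n z u u' : nat) : 0 < n -> trv n z u = trv n z u' -> u = u'.
Proof.
move=> n0 h.
have h1 := trv_div z u n0; have h2 := trv_mod z u n0.
rewrite h trv_div // in h1; rewrite h trv_mod // in h2.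
move/eqP: h2; rewrite eqn_modDr !modn_mod => /eqP h2.
by rewrite (divn_eq u n) (divn_eq u' n) h1 h2.
Qed.

Lemma L1 (s : seq nat) : sumn s <= 1 ->
  count (fun m => 0 < m) s = (0 < sumn s).
Proof.
elim: s => //= a s IH h.
rewrite IH; last by lia.
by case: a h => [|[|a]] /=; case: (sumn s) => [|[|]] //.
Qed.

Lemma L2 (T U : Type) (bl : seq T) (zs : seq U) (G : T -> U -> nat) :
  sumn [seq sumn [seq G b z | z <- zs] | b <- bl] = 1 ->
  sumn [seq count (fun z => 0 < G b z) zs | b <- bl] = 1.
Proof.
have E : forall b, sumn [seq G b z | z <- zs] <= 1 ->
  count (fun z => 0 < G b z) zs = (0 < sumn [seq G b z | z <- zs]).
  by move=> b h; rewrite -(L1 h) count_map.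
elim: bl => //= b bl IH h.
have hb : sumn [seq G b z | z <- zs] <= 1 by lia.
rewrite E //.
case: (sumn [seq G b z | z <- zs]) h hb => [|[|]] //= h _.
- by rewrite IH.
- have h0 : sumn [seq sumn [seq G b0 z | z <- zs] | b0 <- bl] = 0 by lia.
  suff -> : sumn [seq count (fun z => 0 < G b0 z) zs | b0 <- bl] = 0 by [].
  move: h0; clear IH h; elim: bl => //= b' bl' IH' h0.
  have h1 : sumn [seq G b' z | z <- zs] <= 1 by lia.
  by rewrite E // IH'; lia.
Qed.

Lemma exch (T U : Type) (A : seq T) (zs : seq U) (Q : T -> U -> bool) :
  sumn [seq count (fun a => Q a z) A | z <- zs] =
  sumn [seq count (fun z => Q a z) zs | a <- A].
Proof.
elim: A => /= [|a A IH]; first by elim: zs.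
rewrite -IH; clear IH; elim: zs => //= z zs IH2.
by rewrite IH2 /=; lia.
Qed.

Definition keys (n : nat) (A : seq (nat * nat)) (b : seq nat) :=
  [seq key n (nth 0 b a.1) (nth 0 b a.2) | a <- A].

Lemma GL (A : seq (nat * nat)) (m n : nat) (bl : seq (seq nat)) :
  m.+1 = n + n ->
  all (fun a => (a.1 < 7) && (a.2 < 7)) A ->
  all (fun b => (size b == 7) && uniq b && all (fun x => x < m.+1) b) bl ->
  (forall u w, u < m.+1 -> w < m.+1 -> u != w ->
     count (pred1 (key n u w)) (flatten [seq keys n A b | b <- bl]) = 1) ->
  has_decomposition A m.+1.
Proof.
move=> hmn hA hbl hcnt.
have n0 : 0 < n by lia.
exists (flatten [seq [seq mkt m (map (trv n z) b) | z <- iota 0 n] | b <- bl]).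
split.
- move=> t /flattenP [ts /mapP [b hb ->] /mapP [z hz ->]].
  move/allP: hbl => /(_ b hb) /andP [/andP [/eqP hs hu] hall].
  rewrite /mkt /=.
  rewrite map_inj_uniq ?val_ord_tuple ?enum_uniq //.
  move=> i j /(congr1 val); rewrite /= !inordK; last first.
  + rewrite (nth_map 0) ?hs //; rewrite hmn; apply: trv_lt => //; rewrite -hmn.
    by move/allP: hall; apply; rewrite mem_nth ?hs.
  + rewrite (nth_map 0) ?hs //; rewrite hmn; apply: trv_lt => //; rewrite -hmn.
    by move/allP: hall; apply; rewrite mem_nth ?hs.
  rewrite !(nth_map 0) ?hs // => /(trv_inj n0) /eqP.
  rewrite nth_uniq ?hs // => /eqP; apply: val_inj.
- move=> x y hxy.
  have hx : x < m.+1 := ltn_ord x.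
  have hy : y < m.+1 := ltn_ord y.
  have H := hcnt x y hx hy hxy.
  rewrite count_flatten -map_comp in H.
  rewrite count_flatten -map_comp.
  set G := fun b z => count (fun a : nat * nat => (trv n z (nth 0 b a.1) == x)
                                               && (trv n z (nth 0 b a.2) == y)) A.
  have C2 : forall b, b \in bl ->
    (count (pred1 (key n x y)) \o keys n A) b = sumn [seq G b z | z <- iota 0 n].
    move=> b hb /=.
    rewrite /G (exch A (iota 0 n) (fun a z => (trv n z (nth 0 b a.1) == x)
                                               && (trv n z (nth 0 b a.2) == y))).
    rewrite /keys count_map -sumn_count.
    by apply: congr1; apply: eq_map => a /=; rewrite KL.
  have C1 : forall b, b \in bl ->
    (count (fun t => (x, y) \in copy_arcs A t) \o
      (fun b => [seq mkt m [seq trv n z i | i <- b] | z <- iota 0 n])) b =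
    count (fun z => 0 < G b z) (iota 0 n).
    move=> b hb /=; rewrite count_map; apply: eq_count => z /=.
    move/allP: hbl => /(_ b hb) /andP [/andP [/eqP hs hu] hall].
    rewrite /copy_arcs -has_pred1 has_map has_count /G.
    congr (0 < _); apply: eq_in_count => a ha /=.
    move/allP: hA => /(_ a ha) /andP [ha1 ha2].
    rewrite /mkt !tnth_mktuple !inordK // xpair_eqE.
    have lt1 : trv n z (nth 0 b a.1) < m.+1.
      rewrite hmn; apply: trv_lt => //; rewrite -hmn.
      by move/allP: hall; apply; rewrite mem_nth ?hs.
    have lt2 : trv n z (nth 0 b a.2) < m.+1.
      rewrite hmn; apply: trv_lt => //; rewrite -hmn.
      by move/allP: hall; apply; rewrite mem_nth ?hs.
    rewrite !(nth_map 0) ?hs // -!val_eqE /= !inordK //.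
  rewrite (iffLR (eq_in_map _ _ bl) C2) in H.
  rewrite (iffLR (eq_in_map _ _ bl) C1).
  by apply: L2.
Qed.

Lemma divmodE (n X h : nat) : X < n ->
  ((X + h * n) %/ n = h) /\ ((X + h * n) %% n = X).
Proof.
move=> hX; have n0 : 0 < n by lia.
rewrite addnC divnMDl // modnMDl divn_small // modn_small //.
by rewrite addn0.
Qed.

Lemma keyE (n X Y D h1 h2 : nat) : X < n -> Y < n -> D < n ->
  (Y + n = D + X \/ Y = D + X) ->
  key n (X + h1 * n) (Y + h2 * n) = (h1, h2, D).
Proof.
move=> hX hY hD hor.
have [d1 m1] := divmodE h1 hX; have [d2 m2] := divmodE h2 hY.
rewrite /key d1 d2 m1 m2.
case: hor => hor.
- by rewrite (_ : Y + n - X = D) ?modn_small //; lia.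
- by rewrite (_ : Y + n - X = D + n) ?modnDr ?modn_small //; lia.
Qed.

Lemma cons_congr (T : Type) (x y : T) (s t : seq T) :
  x = y -> s = t -> x :: s = y :: t.
Proof. by move=> -> ->. Qed.

Ltac solve_keys := move=> *; rewrite /keys /=;
  repeat (apply: cons_congr; first by apply: keyE; lia); done.

Ltac solve_ok := move=> *; rewrite /= !inE !negb_or; repeat (apply/andP; split); lia.

Lemma famE (n : nat) (A : seq (nat * nat)) (F : nat -> seq nat)
  (f0 f1 f2 f3 f4 f5 f6 : nat -> nat * nat * nat) (s : seq nat) (P : pred (nat * nat * nat)) :
  (forall j, j \in s -> keys n A (F j) = [:: f0 j; f1 j; f2 j; f3 j; f4 j; f5 j; f6 j]) ->
  count P (flatten [seq keys n A b | b <- [seq F j | j <- s]]) =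
  count P (map f0 s) + count P (map f1 s) + count P (map f2 s) + count P (map f3 s)
  + count P (map f4 s) + count P (map f5 s) + count P (map f6 s).
Proof.
elim: s => //= j s IH H.
rewrite count_cat H ?mem_head // IH; last by move=> j' hj'; apply: H; rewrite inE hj' orbT.
rewrite /=; lia.
Qed.

Lemma cK (a b h1 h2 e : nat) (f : nat -> nat) (s : seq nat) :
  count (pred1 (h1, h2, e)) [seq (a, b, f j) | j <- s] =
  ((a == h1) && (b == h2)) * count (pred1 e) [seq f j | j <- s].
Proof.
elim: s => [|j s IH] /=; first by rewrite muln0.
rewrite IH !xpair_eqE.
by case: (a == h1); case: (b == h2); case: (f j == e); rewrite /= ?mul1n ?mul0n.
Qed.

Lemma cnt_inj (f : nat -> nat) (k e : nat) :
  {in iota 0 k &, injective f} ->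
  count (pred1 e) [seq f j | j <- iota 0 k] = has (fun j => f j == e) (iota 0 k).
Proof.
move=> hi; rewrite count_uniq_mem ?map_inj_in_uniq ?iota_uniq //.
by rewrite -has_pred1 has_map.
Qed.

Lemma cnt_inc (c k e : nat) :
  count (pred1 e) [seq c + j | j <- iota 0 k] = (c <= e < c + k).
Proof.
rewrite cnt_inj; last by move=> x y _ _; lia.
congr nat_of_bool; apply/idP/idP => [/hasP [j hj /eqP hj']|h].
  by rewrite mem_iota in hj; lia.
by apply/hasP; exists (e - c); [rewrite mem_iota; lia | apply/eqP; lia].
Qed.

Lemma cnt_dec (c k e : nat) : k <= c.+1 ->
  count (pred1 e) [seq c - j | j <- iota 0 k] = (c.+1 - k <= e <= c).
Proof.
move=> hk; rewrite cnt_inj; last by move=> x y; rewrite !mem_iota => hx hy; lia.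
congr nat_of_bool; apply/idP/idP => [/hasP [j hj /eqP hj']|h].
  by rewrite mem_iota in hj; lia.
by apply/hasP; exists (c - e); [rewrite mem_iota; lia | apply/eqP; lia].
Qed.

Lemma cnt_inc2 (c k e : nat) :
  count (pred1 e) [seq c + 2 * j | j <- iota 0 k] = (c <= e < c + 2 * k) && ((e - c) %% 2 == 0).
Proof.
rewrite cnt_inj; last by move=> x y _ _; lia.
congr nat_of_bool; apply/idP/idP => [/hasP [j hj /eqP hj']|h].
  by rewrite mem_iota in hj; lia.
by apply/hasP; exists ((e - c) %/ 2); [rewrite mem_iota; lia | apply/eqP; lia].
Qed.

Lemma cnt_dec2 (c k e : nat) : 2 * k <= c + 2 ->
  count (pred1 e) [seq c - 2 * j | j <- iota 0 k] = (c + 2 - 2 * k <= e <= c) && ((c - e) %% 2 == 0).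
Proof.
move=> hk; rewrite cnt_inj; last by move=> x y; rewrite !mem_iota => hx hy; lia.
congr nat_of_bool; apply/idP/idP => [/hasP [j hj /eqP hj']|h].
  by rewrite mem_iota in hj; lia.
by apply/hasP; exists ((c - e) %/ 2); [rewrite mem_iota; lia | apply/eqP; lia].
Qed.

Ltac finish_cnt :=
  match goal with
  | h1l : ?h1 <= 1, h2l : ?h2 <= 1, hne : (?h1 == ?h2 -> _) |- _ =>
    case: h1 h1l hne => [|[|//]] _ hne; case: h2 h2l hne => [|[|//]] _ hne;
    rewrite /= ?mul0n ?mul1n; lia
  end.

Lemma specE (n : nat) (A : seq (nat * nat)) (b1 b2 : seq nat) (P : pred (nat * nat * nat)) :
  count P (flatten [seq keys n A b | b <- [:: b1; b2]]) = count P (keys n A b1) + count P (keys n A b2).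
Proof. by rewrite /= cats0 count_cat. Qed.

Ltac dec_bools :=
  repeat match goal with
  | |- context [nat_of_bool ?b] =>
     lazymatch b with true => fail | false => fail | _ =>
       first [ have -> : b = false by lia | have -> : b = true by lia ] end
  end.
Ltac sum_one := dec_bools; rewrite /=;
  first [ match goal with |- context [nat_of_bool ?b] =>
            lazymatch b with true => fail | false => fail | _ =>
              case: (boolP b) => ?; sum_one end end
        | lia ].

Lemma all_fam (Q : pred (seq nat)) (F : nat -> seq nat) (k : nat) :
  (forall j, j < k -> Q (F j)) -> all Q [seq F j | j <- iota 0 k].
Proof.
move=> H; apply/allP => b /mapP [j hj ->]; apply: H.
by rewrite mem_iota in hj; lia.
Qed.

Lemma key_ne0 (n u w : nat) : 0 < n -> u != w -> u %/ n = w %/ n ->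
  0 < (w %% n + n - u %% n) %% n.
Proof.
move=> n0 huw hd.
have ha := ltn_pmod u n0; have hb := ltn_pmod w n0.
rewrite lt0n; apply/negP => /eqP h0.
have eab : u %% n = w %% n.
  case: (leqP (u %% n) (w %% n)) => hab.
  - move: h0; rewrite (_ : w %% n + n - u %% n = (w %% n - u %% n) + n); last by lia.
    by rewrite modnDr modn_small; lia.
  - move: h0; rewrite modn_small; lia.
by move/eqP: huw; apply; rewrite (divn_eq u n) (divn_eq w n) hd eab.
Qed.

Lemma main_k (A : seq (nat * nat)) (k : nat) (BL : seq (seq nat)) :
  all (fun a => (a.1 < 7) && (a.2 < 7)) A ->
  all (fun b => (size b == 7) && uniq b && all (fun x => x < (14*k+7).+1) b) BL ->
  (forall h1 h2 e, h1 <= 1 -> h2 <= 1 -> e < 7*k+4 -> (h1 == h2 -> 0 < e) ->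
     count (pred1 (h1, h2, e)) (flatten [seq keys (7*k+4) A b | b <- BL]) = 1) ->
  has_decomposition A (14*k+7).+1.
Proof.
move=> hA hB hC.
have n0 : 0 < 7 * k + 4 by lia.
apply: (@GL A (14*k+7) (7*k+4) BL) => //; first by lia.
move=> u w hu hw huw; rewrite /key; apply: hC.
- by rewrite -ltnS ltn_divLR //; lia.
- by rewrite -ltnS ltn_divLR //; lia.
- exact: ltn_pmod.
- by move=> /eqP hd; apply: key_ne0.
Qed.

Ltac sum_one2 :=
  match goal with
  | |- context [nat_of_bool ?b] =>
     lazymatch b with true => fail | false => fail | _ =>
       case: (boolP b) => ?; [dec_bools; rewrite /=; lia | sum_one2] end
  | _ => rewrite /=; lia
  end.

Lemma cnt_incI (c k e : nat) :
  count (pred1 e) [seq c + j | j <- iota 0 k] = count (pred1 e) (iota c k).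
Proof. by rewrite -iotaDl addn0. Qed.

Lemma cnt_iota (c k e : nat) : count (pred1 e) (iota c k) = (c <= e < c + k).
Proof. by rewrite count_uniq_mem ?iota_uniq // mem_iota. Qed.

Lemma cnt_decI (c k e : nat) : k <= c.+1 ->
  count (pred1 e) [seq c - j | j <- iota 0 k] = count (pred1 e) (iota (c.+1 - k) k).
Proof. by move=> hk; rewrite cnt_dec // cnt_iota; congr nat_of_bool; lia. Qed.

Lemma dbl_ii (a ce co k e : nat) : ce = a -> co = a + 1 ->
  count (@PredOfSimpl.coerce nat (pred1 e)) [seq ce + 2 * j | j <- iota 0 k] + count (@PredOfSimpl.coerce nat (pred1 e)) [seq co + 2 * j | j <- iota 0 k]
  = count (@PredOfSimpl.coerce nat (pred1 e)) (iota a (2 * k)).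
Proof. by move=> -> ->; rewrite !cnt_inc2 cnt_iota; lia. Qed.

Lemma dbl_id (a ce co k e : nat) : 0 < k -> ce = a -> co = a + 2 * k - 1 ->
  count (@PredOfSimpl.coerce nat (pred1 e)) [seq ce + 2 * j | j <- iota 0 k] + count (@PredOfSimpl.coerce nat (pred1 e)) [seq co - 2 * j | j <- iota 0 k]
  = count (@PredOfSimpl.coerce nat (pred1 e)) (iota a (2 * k)).
Proof. by move=> hk -> ->; rewrite cnt_inc2 cnt_dec2 ?cnt_iota; lia. Qed.

Lemma dbl_di (a ce co k e : nat) : 0 < k -> ce = a + 2 * k - 2 -> co = a + 1 ->
  count (@PredOfSimpl.coerce nat (pred1 e)) [seq ce - 2 * j | j <- iota 0 k] + count (@PredOfSimpl.coerce nat (pred1 e)) [seq co + 2 * j | j <- iota 0 k]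
  = count (@PredOfSimpl.coerce nat (pred1 e)) (iota a (2 * k)).
Proof. by move=> hk -> ->; rewrite cnt_inc2 cnt_dec2 ?cnt_iota; lia. Qed.

Lemma dbl_dd (a ce co k e : nat) : 0 < k -> ce = a + 2 * k - 2 -> co = a + 2 * k - 1 ->
  count (@PredOfSimpl.coerce nat (pred1 e)) [seq ce - 2 * j | j <- iota 0 k] + count (@PredOfSimpl.coerce nat (pred1 e)) [seq co - 2 * j | j <- iota 0 k]
  = count (@PredOfSimpl.coerce nat (pred1 e)) (iota a (2 * k)).
Proof. by move=> hk -> ->; rewrite !cnt_dec2 ?cnt_iota; lia. Qed.

Fixpoint chainb (lo : nat) (ps : seq (nat * nat)) : bool :=
  if ps is p :: ps' then (p.1 == lo) && chainb (lo + p.2) ps' else true.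

Lemma tile_eq (e : nat) (ps : seq (nat * nat)) : forall lo, chainb lo ps ->
  count (pred1 e) (iota lo (sumn (map snd ps))) =
  sumn [seq count (pred1 e) (iota p.1 p.2) | p <- ps].
Proof.
elim: ps => //= [[s l] ps IH] lo /andP [/eqP /= -> hc].
by rewrite iotaD count_cat; congr (_ + _); apply: IH.
Qed.

Lemma tileP (e lo : nat) (ps : seq (nat * nat)) :
  lo <= e < lo + sumn (map snd ps) -> chainb lo ps ->
  sumn [seq count (pred1 e) (iota p.1 p.2) | p <- ps] = 1.
Proof. by move=> hr hc; rewrite -(tile_eq e hc) cnt_iota hr. Qed.

Unset Implicit Arguments.

Definition P1_S1 (k : nat) : seq nat := [:: (0) + 0 * (7*k+4); (1) + 0 * (7*k+4); (3*k + 1) + 1 * (7*k+4); (4*k + 3) + 0 * (7*k+4); (k + 1) + 0 * (7*k+4); (5*k + 4) + 1 * (7*k+4); (3*k + 3) + 0 * (7*k+4)].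
Lemma P1_S1_keys (k : nat) : 0 < k -> keys (7*k+4) (Darcs 1) (P1_S1 k) = [:: (0, 0, (7*k + 3)); (0, 1, (3*k)); (1, 0, (k + 2)); (0, 0, (4*k + 2)); (0, 1, (4*k + 3)); (1, 0, (5*k + 3)); (0, 0, (4*k + 1))].
Proof. solve_keys. Qed.
Lemma P1_S1_ok (k : nat) : 0 < k -> (size (P1_S1 k) == 7) && uniq (P1_S1 k) && all (fun x => x < (14*k+7).+1) (P1_S1 k).
Proof. solve_ok. Qed.
Definition P1_S2 (k : nat) : seq nat := [:: (3*k + 1) + 1 * (7*k+4); (5*k + 2) + 1 * (7*k+4); (k) + 1 * (7*k+4); (2*k + 1) + 0 * (7*k+4); (6*k + 3) + 1 * (7*k+4); (0) + 1 * (7*k+4); (0) + 0 * (7*k+4)].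
Lemma P1_S2_keys (k : nat) : 0 < k -> keys (7*k+4) (Darcs 1) (P1_S2 k) = [:: (1, 1, (5*k + 3)); (1, 1, (3*k + 2)); (1, 0, (k + 1)); (0, 1, (4*k + 2)); (1, 1, (k + 1)); (1, 0, (0)); (0, 1, (3*k + 1))].
Proof. solve_keys. Qed.
Lemma P1_S2_ok (k : nat) : 0 < k -> (size (P1_S2 k) == 7) && uniq (P1_S2 k) && all (fun x => x < (14*k+7).+1) (P1_S2 k).
Proof. solve_ok. Qed.
Definition P1_F1 (k j : nat) : seq nat := [:: (k + 2*j) + 1 * (7*k+4); (0) + 0 * (7*k+4); (j) + 1 * (7*k+4); (5*k + 2) + 1 * (7*k+4); (j + 1) + 0 * (7*k+4); (k + 2*j + 2) + 0 * (7*k+4); (4*k + 3*j + 3) + 0 * (7*k+4)].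
Lemma P1_F1_keys (k j : nat) : 0 < k -> j < k -> keys (7*k+4) (Darcs 1) (P1_F1 k j) = [:: (0, 1, (k) + 2*j); (0, 1, (0) + j); (1, 1, (5*k + 2) - j); (1, 0, (2*k + 3) + j); (0, 0, (k + 1) + j); (0, 0, (3*k + 1) + j); (0, 1, (4*k + 1) - j)].
Proof. solve_keys. Qed.
Lemma P1_F1_ok (k j : nat) : 0 < k -> j < k -> (size (P1_F1 k j) == 7) && uniq (P1_F1 k j) && all (fun x => x < (14*k+7).+1) (P1_F1 k j).
Proof. solve_ok. Qed.
Definition P1_F2 (k j : nat) : seq nat := [:: (3*k + j + 1) + 0 * (7*k+4); (2*k + 2*j + 1) + 0 * (7*k+4); (5*k) + 1 * (7*k+4); (7*k + 1 - j) + 1 * (7*k+4); (k) + 0 * (7*k+4); (k - j - 1) + 1 * (7*k+4); (4*k + 2) + 0 * (7*k+4)].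
Lemma P1_F2_keys (k j : nat) : 0 < k -> j < k -> keys (7*k+4) (Darcs 1) (P1_F2 k j) = [:: (0, 0, (k) - j); (0, 1, (3*k - 1) - 2*j); (1, 1, (2*k + 1) - j); (1, 0, (k + 3) + j); (0, 1, (7*k + 3) - j); (1, 0, (3*k + 3) + j); (0, 0, (6*k + 3) + j)].
Proof. solve_keys. Qed.
Lemma P1_F2_ok (k j : nat) : 0 < k -> j < k -> (size (P1_F2 k j) == 7) && uniq (P1_F2 k j) && all (fun x => x < (14*k+7).+1) (P1_F2 k j).
Proof. solve_ok. Qed.
Definition P1_F3 (k j : nat) : seq nat := [:: (k + 1) + 0 * (7*k+4); (k - j) + 1 * (7*k+4); (0) + 0 * (7*k+4); (4*k + 2*j + 4) + 1 * (7*k+4); (4*k + j + 3) + 1 * (7*k+4); (k + 1) + 1 * (7*k+4); (4*k + 2 - j) + 1 * (7*k+4)].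
Lemma P1_F3_keys (k j : nat) : 0 < k -> j < k -> keys (7*k+4) (Darcs 1) (P1_F3 k j) = [:: (1, 0, (1) + j); (1, 0, (6*k + 4) + j); (0, 1, (4*k + 4) + 2*j); (1, 1, (7*k + 3) - j); (1, 1, (4*k + 2) - j); (1, 1, (3*k + 1) - j); (1, 0, (4*k + 3) + j)].
Proof. solve_keys. Qed.
Lemma P1_F3_ok (k j : nat) : 0 < k -> j < k -> (size (P1_F3 k j) == 7) && uniq (P1_F3 k j) && all (fun x => x < (14*k+7).+1) (P1_F3 k j).
Proof. solve_ok. Qed.
Definition P1_F4 (k j : nat) : seq nat := [:: (k) + 1 * (7*k+4); (j) + 1 * (7*k+4); (6*k + 3) + 0 * (7*k+4); (5*k + 1 - j) + 0 * (7*k+4); (3*k - 2*j - 1) + 0 * (7*k+4); (5*k - j) + 0 * (7*k+4); (2*k + j + 1) + 1 * (7*k+4)].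
Lemma P1_F4_keys (k j : nat) : 0 < k -> j < k -> keys (7*k+4) (Darcs 1) (P1_F4 k j) = [:: (1, 1, (k) - j); (1, 0, (6*k + 3) - j); (0, 0, (6*k + 2) - j); (0, 0, (5*k + 2) - j); (0, 0, (2*k + 1) + j); (0, 1, (4*k + 5) + 2*j); (1, 1, (6*k + 3) - j)].
Proof. solve_keys. Qed.
Lemma P1_F4_ok (k j : nat) : 0 < k -> j < k -> (size (P1_F4 k j) == 7) && uniq (P1_F4 k j) && all (fun x => x < (14*k+7).+1) (P1_F4 k j).
Proof. solve_ok. Qed.
Definition P1_BL (k : nat) : seq (seq nat) := [:: P1_S1 k; P1_S2 k] ++ [seq P1_F1 k j | j <- iota 0 k] ++ [seq P1_F2 k j | j <- iota 0 k] ++ [seq P1_F3 k j | j <- iota 0 k] ++ [seq P1_F4 k j | j <- iota 0 k].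
Lemma P1_F1_cnt (k : nat) (P : pred (nat * nat * nat)) : 0 < k -> count P (flatten [seq keys (7*k+4) (Darcs 1) b | b <- [seq P1_F1 k j | j <- iota 0 k]]) = count P [seq (0, 1, (k) + 2*j) | j <- iota 0 k] + count P [seq (0, 1, (0) + j) | j <- iota 0 k] + count P [seq (1, 1, (5*k + 2) - j) | j <- iota 0 k] + count P [seq (1, 0, (2*k + 3) + j) | j <- iota 0 k] + count P [seq (0, 0, (k + 1) + j) | j <- iota 0 k] + count P [seq (0, 0, (3*k + 1) + j) | j <- iota 0 k] + count P [seq (0, 1, (4*k + 1) - j) | j <- iota 0 k].
Proof. move=> hk; apply: famE => j; rewrite mem_iota => hj; apply: P1_F1_keys; lia. Qed.
Lemma P1_F2_cnt (k : nat) (P : pred (nat * nat * nat)) : 0 < k -> count P (flatten [seq keys (7*k+4) (Darcs 1) b | b <- [seq P1_F2 k j | j <- iota 0 k]]) = count P [seq (0, 0, (k) - j) | j <- iota 0 k] + count P [seq (0, 1, (3*k - 1) - 2*j) | j <- iota 0 k] + count P [seq (1, 1, (2*k + 1) - j) | j <- iota 0 k] + count P [seq (1, 0, (k + 3) + j) | j <- iota 0 k] + count P [seq (0, 1, (7*k + 3) - j) | j <- iota 0 k] + count P [seq (1, 0, (3*k + 3) + j) | j <- iota 0 k] + count P [seq (0, 0, (6*k + 3) + j) | j <- iota 0 k].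
Proof. move=> hk; apply: famE => j; rewrite mem_iota => hj; apply: P1_F2_keys; lia. Qed.
Lemma P1_F3_cnt (k : nat) (P : pred (nat * nat * nat)) : 0 < k -> count P (flatten [seq keys (7*k+4) (Darcs 1) b | b <- [seq P1_F3 k j | j <- iota 0 k]]) = count P [seq (1, 0, (1) + j) | j <- iota 0 k] + count P [seq (1, 0, (6*k + 4) + j) | j <- iota 0 k] + count P [seq (0, 1, (4*k + 4) + 2*j) | j <- iota 0 k] + count P [seq (1, 1, (7*k + 3) - j) | j <- iota 0 k] + count P [seq (1, 1, (4*k + 2) - j) | j <- iota 0 k] + count P [seq (1, 1, (3*k + 1) - j) | j <- iota 0 k] + count P [seq (1, 0, (4*k + 3) + j) | j <- iota 0 k].
Proof. move=> hk; apply: famE => j; rewrite mem_iota => hj; apply: P1_F3_keys; lia. Qed.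
Lemma P1_F4_cnt (k : nat) (P : pred (nat * nat * nat)) : 0 < k -> count P (flatten [seq keys (7*k+4) (Darcs 1) b | b <- [seq P1_F4 k j | j <- iota 0 k]]) = count P [seq (1, 1, (k) - j) | j <- iota 0 k] + count P [seq (1, 0, (6*k + 3) - j) | j <- iota 0 k] + count P [seq (0, 0, (6*k + 2) - j) | j <- iota 0 k] + count P [seq (0, 0, (5*k + 2) - j) | j <- iota 0 k] + count P [seq (0, 0, (2*k + 1) + j) | j <- iota 0 k] + count P [seq (0, 1, (4*k + 5) + 2*j) | j <- iota 0 k] + count P [seq (1, 1, (6*k + 3) - j) | j <- iota 0 k].
Proof. move=> hk; apply: famE => j; rewrite mem_iota => hj; apply: P1_F4_keys; lia. Qed.
Lemma P1_cnt (k h1 h2 e : nat) : 0 < k -> h1 <= 1 -> h2 <= 1 -> e < 7*k+4 -> (h1 == h2 -> 0 < e) ->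
  count (pred1 (h1, h2, e)) (flatten [seq keys (7*k+4) (Darcs 1) b | b <- P1_BL k]) = 1.
Proof.
move=> hk h1l h2l he hne.
rewrite /P1_BL !map_cat !flatten_cat !count_cat.
rewrite (P1_F1_cnt k _ hk) (P1_F2_cnt k _ hk) (P1_F3_cnt k _ hk) (P1_F4_cnt k _ hk).
rewrite (P1_S1_keys k hk) (P1_S2_keys k hk) /= !xpair_eqE.
rewrite !cK !cnt_incI.
rewrite (@cnt_decI (5*k + 2) k e); last by lia.
rewrite (@cnt_decI (4*k + 1) k e); last by lia.
rewrite (@cnt_decI (k) k e); last by lia.
rewrite (@cnt_decI (2*k + 1) k e); last by lia.
rewrite (@cnt_decI (7*k + 3) k e); last by lia.
rewrite (@cnt_decI (4*k + 2) k e); last by lia.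
rewrite (@cnt_decI (3*k + 1) k e); last by lia.
rewrite (@cnt_decI (6*k + 3) k e); last by lia.
rewrite (@cnt_decI (6*k + 2) k e); last by lia.
move/implyP: hne => hne.
case: h1 h1l hne => [|[|//]] _ hne; case: h2 h2l hne => [|[|//]] _ hne;
  rewrite /= ?mul0n ?mul1n in hne *.
- have T := @tileP e 1 [:: ((k).+1 - k, k); ((k + 1), k); ((2*k + 1), k); ((3*k + 1), k); ((4*k + 1), 1); ((4*k + 2), 1); ((5*k + 2).+1 - k, k); ((6*k + 2).+1 - k, k); ((6*k + 3), k); ((7*k + 3), 1)] ltac:(rewrite /=; lia) ltac:(rewrite /=; lia).
  rewrite /= in T.  lia.
- have T := @tileP e 0 [:: ((0), k); ((k), 2*k); ((3*k), 1); ((3*k + 1), 1); ((4*k + 1).+1 - k, k); ((4*k + 2), 1); ((4*k + 3), 1); ((4*k + 4), 2*k); ((7*k + 3).+1 - k, k)] ltac:(rewrite /=; lia) ltac:(rewrite /=; lia).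
  rewrite /= in T. have := @dbl_id (k) (k) (3*k - 1) k e hk ltac:(lia) ltac:(lia). have := @dbl_ii (4*k + 4) (4*k + 4) (4*k + 5) k e ltac:(lia) ltac:(lia). lia.
- have T := @tileP e 0 [:: ((0), 1); ((1), k); ((k + 1), 1); ((k + 2), 1); ((k + 3), k); ((2*k + 3), k); ((3*k + 3), k); ((4*k + 3), k); ((5*k + 3), 1); ((6*k + 3).+1 - k, k); ((6*k + 4), k)] ltac:(rewrite /=; lia) ltac:(rewrite /=; lia).
  rewrite /= in T.  lia.
- have T := @tileP e 1 [:: ((k).+1 - k, k); ((k + 1), 1); ((2*k + 1).+1 - k, k); ((3*k + 1).+1 - k, k); ((3*k + 2), 1); ((4*k + 2).+1 - k, k); ((5*k + 2).+1 - k, k); ((5*k + 3), 1); ((6*k + 3).+1 - k, k); ((7*k + 3).+1 - k, k)] ltac:(rewrite /=; lia) ltac:(rewrite /=; lia).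
  rewrite /= in T.  lia.
Qed.
Lemma P1_dec (k : nat) : 0 < k -> has_decomposition (Darcs 1) (14*k+7).+1.
Proof.
move=> hk; apply: (@main_k _ k (P1_BL k)) => //.
- rewrite /P1_BL !all_cat; apply/and5P; split.
  + by apply/and3P; split => //; [exact: (P1_S1_ok k hk) | exact: (P1_S2_ok k hk)].
  + by apply: all_fam => j hj; apply: P1_F1_ok.
  + by apply: all_fam => j hj; apply: P1_F2_ok.
  + by apply: all_fam => j hj; apply: P1_F3_ok.
  + by apply: all_fam => j hj; apply: P1_F4_ok.
- by move=> h1 h2 e *; apply: P1_cnt.
Qed.
Lemma P1_k0 : has_decomposition (Darcs 1) (14*0+7).+1.
Proof.
apply: (@GL (Darcs 1) 7 4 [:: [:: 0; 1; 2; 4; 3; 6; 7]; [:: 4; 5; 7; 1; 6; 2; 0]]) => //.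
move=> u w hu hw huw.
have H : all (fun u => all (fun w => (u == w) || (count (pred1 (key 4 u w)) (flatten [seq keys 4 (Darcs 1) b | b <- [:: [:: 0; 1; 2; 4; 3; 6; 7]; [:: 4; 5; 7; 1; 6; 2; 0]]]) == 1)) (iota 0 8)) (iota 0 8) by vm_compute.
move/allP: H => /(_ u); rewrite mem_iota => /(_ hu) /allP /(_ w); rewrite mem_iota => /(_ hw).
by rewrite (negbTE huw) => /eqP.
Qed.

Definition P2_S1 (k : nat) : seq nat := [:: (2*k + 2) + 1 * (7*k+4); (3*k + 4) + 0 * (7*k+4); (1) + 0 * (7*k+4); (2*k + 1) + 1 * (7*k+4); (3*k + 2) + 0 * (7*k+4); (6*k + 3) + 1 * (7*k+4); (0) + 1 * (7*k+4)].
Lemma P2_S1_keys (k : nat) : 0 < k -> keys (7*k+4) (Darcs 2) (P2_S1 k) = [:: (0, 1, (6*k + 2)); (0, 0, (3*k + 3)); (0, 1, (2*k)); (1, 0, (k + 1)); (0, 1, (3*k + 1)); (1, 1, (k + 1)); (1, 1, (2*k + 2))].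
Proof. solve_keys. Qed.
Lemma P2_S1_ok (k : nat) : 0 < k -> (size (P2_S1 k) == 7) && uniq (P2_S1 k) && all (fun x => x < (14*k+7).+1) (P2_S1 k).
Proof. solve_ok. Qed.
Definition P2_S2 (k : nat) : seq nat := [:: (k + 2) + 0 * (7*k+4); (k + 1) + 0 * (7*k+4); (k + 1) + 1 * (7*k+4); (0) + 1 * (7*k+4); (5*k + 3) + 0 * (7*k+4); (4*k + 2) + 1 * (7*k+4); (k) + 0 * (7*k+4)].
Lemma P2_S2_keys (k : nat) : 0 < k -> keys (7*k+4) (Darcs 2) (P2_S2 k) = [:: (0, 0, (1)); (1, 0, (0)); (1, 1, (6*k + 3)); (1, 0, (5*k + 3)); (0, 1, (6*k + 3)); (1, 0, (4*k + 2)); (0, 0, (2))].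
Proof. solve_keys. Qed.
Lemma P2_S2_ok (k : nat) : 0 < k -> (size (P2_S2 k) == 7) && uniq (P2_S2 k) && all (fun x => x < (14*k+7).+1) (P2_S2 k).
Proof. solve_ok. Qed.
Definition P2_F1 (k j : nat) : seq nat := [:: (2*k - 2*j) + 0 * (7*k+4); (4*k + 2) + 0 * (7*k+4); (3*k + j) + 0 * (7*k+4); (6*k + 2) + 0 * (7*k+4); (k - j) + 0 * (7*k+4); (0) + 1 * (7*k+4); (2*k + 1 - j) + 1 * (7*k+4)].
Lemma P2_F1_keys (k j : nat) : 0 < k -> j < k -> keys (7*k+4) (Darcs 2) (P2_F1 k j) = [:: (0, 0, (5*k + 2) - 2*j); (0, 0, (k + 2) - j); (0, 0, (3*k + 2) - j); (0, 0, (2*k + 2) - j); (0, 1, (6*k + 4) + j); (1, 1, (2*k + 1) - j); (1, 0, (7*k + 3) - j)].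
Proof. solve_keys. Qed.
Lemma P2_F1_ok (k j : nat) : 0 < k -> j < k -> (size (P2_F1 k j) == 7) && uniq (P2_F1 k j) && all (fun x => x < (14*k+7).+1) (P2_F1 k j).
Proof. solve_ok. Qed.
Definition P2_F2 (k j : nat) : seq nat := [:: (k - 1) + 1 * (7*k+4); (j) + 0 * (7*k+4); (3*k + 1) + 1 * (7*k+4); (6*k + j + 3) + 0 * (7*k+4); (4*k + 2 - j) + 0 * (7*k+4); (6*k + 1 - 2*j) + 1 * (7*k+4); (3*k - j) + 1 * (7*k+4)].
Lemma P2_F2_keys (k j : nat) : 0 < k -> j < k -> keys (7*k+4) (Darcs 2) (P2_F2 k j) = [:: (0, 1, (k - 1) - j); (1, 0, (4*k + 3) + j); (1, 0, (3*k + 2) + j); (0, 0, (5*k + 3) - 2*j); (0, 1, (2*k - 1) - j); (1, 1, (4*k + 3) + j); (1, 1, (5*k + 3) + j)].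
Proof. solve_keys. Qed.
Lemma P2_F2_ok (k j : nat) : 0 < k -> j < k -> (size (P2_F2 k j) == 7) && uniq (P2_F2 k j) && all (fun x => x < (14*k+7).+1) (P2_F2 k j).
Proof. solve_ok. Qed.
Definition P2_F3 (k j : nat) : seq nat := [:: (5*k + 2*j + 2) + 1 * (7*k+4); (j) + 0 * (7*k+4); (2*k) + 1 * (7*k+4); (2*k - j - 1) + 1 * (7*k+4); (5*k - 2*j) + 0 * (7*k+4); (3*k - j) + 0 * (7*k+4); (2*k) + 0 * (7*k+4)].
Lemma P2_F3_keys (k j : nat) : 0 < k -> j < k -> keys (7*k+4) (Darcs 2) (P2_F3 k j) = [:: (0, 1, (5*k + 2) + j); (1, 0, (5*k + 4) + j); (1, 1, (7*k + 3) - j); (1, 0, (3*k + 1) - j); (0, 0, (5*k + 4) + j); (0, 0, (6*k + 4) + j); (0, 1, (3*k + 2) + 2*j)].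
Proof. solve_keys. Qed.
Lemma P2_F3_ok (k j : nat) : 0 < k -> j < k -> (size (P2_F3 k j) == 7) && uniq (P2_F3 k j) && all (fun x => x < (14*k+7).+1) (P2_F3 k j).
Proof. solve_ok. Qed.
Definition P2_F4 (k j : nat) : seq nat := [:: (4*k + 3) + 1 * (7*k+4); (k - j) + 1 * (7*k+4); (0) + 1 * (7*k+4); (k + j + 2) + 0 * (7*k+4); (6*k + 3 - j) + 1 * (7*k+4); (k + 2) + 1 * (7*k+4); (k + j + 3) + 0 * (7*k+4)].
Lemma P2_F4_keys (k j : nat) : 0 < k -> j < k -> keys (7*k+4) (Darcs 2) (P2_F4 k j) = [:: (1, 1, (3*k + 3) + j); (1, 1, (k) - j); (1, 0, (k + 2) + j); (0, 1, (5*k + 1) - 2*j); (1, 1, (2*k + 3) + j); (1, 0, (1) + j); (0, 1, (3*k) - j)].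
Proof. solve_keys. Qed.
Lemma P2_F4_ok (k j : nat) : 0 < k -> j < k -> (size (P2_F4 k j) == 7) && uniq (P2_F4 k j) && all (fun x => x < (14*k+7).+1) (P2_F4 k j).
Proof. solve_ok. Qed.
Definition P2_BL (k : nat) : seq (seq nat) := [:: P2_S1 k; P2_S2 k] ++ [seq P2_F1 k j | j <- iota 0 k] ++ [seq P2_F2 k j | j <- iota 0 k] ++ [seq P2_F3 k j | j <- iota 0 k] ++ [seq P2_F4 k j | j <- iota 0 k].
Lemma P2_F1_cnt (k : nat) (P : pred (nat * nat * nat)) : 0 < k -> count P (flatten [seq keys (7*k+4) (Darcs 2) b | b <- [seq P2_F1 k j | j <- iota 0 k]]) = count P [seq (0, 0, (5*k + 2) - 2*j) | j <- iota 0 k] + count P [seq (0, 0, (k + 2) - j) | j <- iota 0 k] + count P [seq (0, 0, (3*k + 2) - j) | j <- iota 0 k] + count P [seq (0, 0, (2*k + 2) - j) | j <- iota 0 k] + count P [seq (0, 1, (6*k + 4) + j) | j <- iota 0 k] + count P [seq (1, 1, (2*k + 1) - j) | j <- iota 0 k] + count P [seq (1, 0, (7*k + 3) - j) | j <- iota 0 k].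
Proof. move=> hk; apply: famE => j; rewrite mem_iota => hj; apply: P2_F1_keys; lia. Qed.
Lemma P2_F2_cnt (k : nat) (P : pred (nat * nat * nat)) : 0 < k -> count P (flatten [seq keys (7*k+4) (Darcs 2) b | b <- [seq P2_F2 k j | j <- iota 0 k]]) = count P [seq (0, 1, (k - 1) - j) | j <- iota 0 k] + count P [seq (1, 0, (4*k + 3) + j) | j <- iota 0 k] + count P [seq (1, 0, (3*k + 2) + j) | j <- iota 0 k] + count P [seq (0, 0, (5*k + 3) - 2*j) | j <- iota 0 k] + count P [seq (0, 1, (2*k - 1) - j) | j <- iota 0 k] + count P [seq (1, 1, (4*k + 3) + j) | j <- iota 0 k] + count P [seq (1, 1, (5*k + 3) + j) | j <- iota 0 k].
Proof. move=> hk; apply: famE => j; rewrite mem_iota => hj; apply: P2_F2_keys; lia. Qed.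
Lemma P2_F3_cnt (k : nat) (P : pred (nat * nat * nat)) : 0 < k -> count P (flatten [seq keys (7*k+4) (Darcs 2) b | b <- [seq P2_F3 k j | j <- iota 0 k]]) = count P [seq (0, 1, (5*k + 2) + j) | j <- iota 0 k] + count P [seq (1, 0, (5*k + 4) + j) | j <- iota 0 k] + count P [seq (1, 1, (7*k + 3) - j) | j <- iota 0 k] + count P [seq (1, 0, (3*k + 1) - j) | j <- iota 0 k] + count P [seq (0, 0, (5*k + 4) + j) | j <- iota 0 k] + count P [seq (0, 0, (6*k + 4) + j) | j <- iota 0 k] + count P [seq (0, 1, (3*k + 2) + 2*j) | j <- iota 0 k].
Proof. move=> hk; apply: famE => j; rewrite mem_iota => hj; apply: P2_F3_keys; lia. Qed.
Lemma P2_F4_cnt (k : nat) (P : pred (nat * nat * nat)) : 0 < k -> count P (flatten [seq keys (7*k+4) (Darcs 2) b | b <- [seq P2_F4 k j | j <- iota 0 k]]) = count P [seq (1, 1, (3*k + 3) + j) | j <- iota 0 k] + count P [seq (1, 1, (k) - j) | j <- iota 0 k] + count P [seq (1, 0, (k + 2) + j) | j <- iota 0 k] + count P [seq (0, 1, (5*k + 1) - 2*j) | j <- iota 0 k] + count P [seq (1, 1, (2*k + 3) + j) | j <- iota 0 k] + count P [seq (1, 0, (1) + j) | j <- iota 0 k] + count P [seq (0, 1, (3*k) - j) | j <- iota 0 k].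
Proof. move=> hk; apply: famE => j; rewrite mem_iota => hj; apply: P2_F4_keys; lia. Qed.
Lemma P2_cnt (k h1 h2 e : nat) : 0 < k -> h1 <= 1 -> h2 <= 1 -> e < 7*k+4 -> (h1 == h2 -> 0 < e) ->
  count (pred1 (h1, h2, e)) (flatten [seq keys (7*k+4) (Darcs 2) b | b <- P2_BL k]) = 1.
Proof.
move=> hk h1l h2l he hne.
rewrite /P2_BL !map_cat !flatten_cat !count_cat.
rewrite (P2_F1_cnt k _ hk) (P2_F2_cnt k _ hk) (P2_F3_cnt k _ hk) (P2_F4_cnt k _ hk).
rewrite (P2_S1_keys k hk) (P2_S2_keys k hk) /= !xpair_eqE.
rewrite !cK !cnt_incI.
rewrite (@cnt_decI (k + 2) k e); last by lia.
rewrite (@cnt_decI (3*k + 2) k e); last by lia.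
rewrite (@cnt_decI (2*k + 2) k e); last by lia.
rewrite (@cnt_decI (2*k + 1) k e); last by lia.
rewrite (@cnt_decI (7*k + 3) k e); last by lia.
rewrite (@cnt_decI (k - 1) k e); last by lia.
rewrite (@cnt_decI (2*k - 1) k e); last by lia.
rewrite (@cnt_decI (3*k + 1) k e); last by lia.
rewrite (@cnt_decI (k) k e); last by lia.
rewrite (@cnt_decI (3*k) k e); last by lia.
move/implyP: hne => hne.
case: h1 h1l hne => [|[|//]] _ hne; case: h2 h2l hne => [|[|//]] _ hne;
  rewrite /= ?mul0n ?mul1n in hne *.
- have T := @tileP e 1 [:: ((1), 1); ((2), 1); ((k + 2).+1 - k, k); ((2*k + 2).+1 - k, k); ((3*k + 2).+1 - k, k); ((3*k + 3), 1); ((3*k + 4), 2*k); ((5*k + 4), k); ((6*k + 4), k)] ltac:(rewrite /=; lia) ltac:(rewrite /=; lia).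
  rewrite /= in T. have := @dbl_dd (3*k + 4) (5*k + 2) (5*k + 3) k e hk ltac:(lia) ltac:(lia). lia.
- have T := @tileP e 0 [:: ((k - 1).+1 - k, k); ((2*k - 1).+1 - k, k); ((2*k), 1); ((3*k).+1 - k, k); ((3*k + 1), 1); ((3*k + 2), 2*k); ((5*k + 2), k); ((6*k + 2), 1); ((6*k + 3), 1); ((6*k + 4), k)] ltac:(rewrite /=; lia) ltac:(rewrite /=; lia).
  rewrite /= in T. have := @dbl_id (3*k + 2) (3*k + 2) (5*k + 1) k e hk ltac:(lia) ltac:(lia). lia.
- have T := @tileP e 0 [:: ((0), 1); ((1), k); ((k + 1), 1); ((k + 2), k); ((3*k + 1).+1 - k, k); ((3*k + 2), k); ((4*k + 2), 1); ((4*k + 3), k); ((5*k + 3), 1); ((5*k + 4), k); ((7*k + 3).+1 - k, k)] ltac:(rewrite /=; lia) ltac:(rewrite /=; lia).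
  rewrite /= in T.  lia.
- have T := @tileP e 1 [:: ((k).+1 - k, k); ((k + 1), 1); ((2*k + 1).+1 - k, k); ((2*k + 2), 1); ((2*k + 3), k); ((3*k + 3), k); ((4*k + 3), k); ((5*k + 3), k); ((6*k + 3), 1); ((7*k + 3).+1 - k, k)] ltac:(rewrite /=; lia) ltac:(rewrite /=; lia).
  rewrite /= in T.  lia.
Qed.
Lemma P2_dec (k : nat) : 0 < k -> has_decomposition (Darcs 2) (14*k+7).+1.
Proof.
move=> hk; apply: (@main_k _ k (P2_BL k)) => //.
- rewrite /P2_BL !all_cat; apply/and5P; split.
  + by apply/and3P; split => //; [exact: (P2_S1_ok k hk) | exact: (P2_S2_ok k hk)].
  + by apply: all_fam => j hj; apply: P2_F1_ok.
  + by apply: all_fam => j hj; apply: P2_F2_ok.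
  + by apply: all_fam => j hj; apply: P2_F3_ok.
  + by apply: all_fam => j hj; apply: P2_F4_ok.
- by move=> h1 h2 e *; apply: P2_cnt.
Qed.
Lemma P2_k0 : has_decomposition (Darcs 2) (14*0+7).+1.
Proof.
apply: (@GL (Darcs 2) 7 4 [:: [:: 0; 1; 3; 4; 2; 6; 5]; [:: 0; 4; 1; 7; 5; 6; 3]]) => //.
move=> u w hu hw huw.
have H : all (fun u => all (fun w => (u == w) || (count (pred1 (key 4 u w)) (flatten [seq keys 4 (Darcs 2) b | b <- [:: [:: 0; 1; 3; 4; 2; 6; 5]; [:: 0; 4; 1; 7; 5; 6; 3]]]) == 1)) (iota 0 8)) (iota 0 8) by vm_compute.
move/allP: H => /(_ u); rewrite mem_iota => /(_ hu) /allP /(_ w); rewrite mem_iota => /(_ hw).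
by rewrite (negbTE huw) => /eqP.
Qed.

Definition P3_S1 (k : nat) : seq nat := [:: (3*k + 2) + 0 * (7*k+4); (0) + 0 * (7*k+4); (3*k + 3) + 0 * (7*k+4); (2) + 1 * (7*k+4); (1) + 0 * (7*k+4); (k + 2) + 0 * (7*k+4); (2*k + 2) + 1 * (7*k+4)].
Lemma P3_S1_keys (k : nat) : 0 < k -> keys (7*k+4) (Darcs 3) (P3_S1 k) = [:: (0, 0, (3*k + 2)); (0, 0, (3*k + 3)); (1, 0, (3*k + 1)); (1, 0, (7*k + 3)); (0, 0, (k + 1)); (0, 1, (k)); (1, 0, (k))].
Proof. solve_keys. Qed.
Lemma P3_S1_ok (k : nat) : 0 < k -> (size (P3_S1 k) == 7) && uniq (P3_S1 k) && all (fun x => x < (14*k+7).+1) (P3_S1 k).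
Proof. solve_ok. Qed.
Definition P3_S2 (k : nat) : seq nat := [:: (2) + 1 * (7*k+4); (2*k + 4) + 0 * (7*k+4); (1) + 1 * (7*k+4); (0) + 1 * (7*k+4); (2*k + 2) + 1 * (7*k+4); (4*k + 5) + 1 * (7*k+4); (k + 3) + 0 * (7*k+4)].
Lemma P3_S2_keys (k : nat) : 0 < k -> keys (7*k+4) (Darcs 3) (P3_S2 k) = [:: (0, 1, (5*k + 2)); (0, 1, (5*k + 1)); (1, 1, (1)); (1, 1, (2*k + 2)); (1, 1, (2*k + 3)); (1, 0, (4*k + 2)); (0, 1, (6*k + 3))].
Proof. solve_keys. Qed.
Lemma P3_S2_ok (k : nat) : 0 < k -> (size (P3_S2 k) == 7) && uniq (P3_S2 k) && all (fun x => x < (14*k+7).+1) (P3_S2 k).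
Proof. solve_ok. Qed.
Definition P3_F1 (k j : nat) : seq nat := [:: (2*j) + 0 * (7*k+4); (5*k + j + 3) + 1 * (7*k+4); (0) + 1 * (7*k+4); (6*k + 3 - 2*j) + 0 * (7*k+4); (2*k - j) + 1 * (7*k+4); (k) + 1 * (7*k+4); (k + j) + 0 * (7*k+4)].
Lemma P3_F1_keys (k j : nat) : 0 < k -> j < k -> keys (7*k+4) (Darcs 3) (P3_F1 k j) = [:: (1, 0, (2*k + 1) + j); (1, 1, (2*k + 1) - j); (0, 1, (k + 1) + 2*j); (0, 1, (3*k + 1) + j); (1, 1, (6*k + 4) + j); (1, 0, (0) + j); (0, 0, (6*k + 4) + j)].
Proof. solve_keys. Qed.
Lemma P3_F1_ok (k j : nat) : 0 < k -> j < k -> (size (P3_F1 k j) == 7) && uniq (P3_F1 k j) && all (fun x => x < (14*k+7).+1) (P3_F1 k j).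
Proof. solve_ok. Qed.
Definition P3_F2 (k j : nat) : seq nat := [:: (k + 1) + 1 * (7*k+4); (6*k + 1 - j) + 1 * (7*k+4); (7*k + 2) + 0 * (7*k+4); (j) + 1 * (7*k+4); (4*k + 1) + 0 * (7*k+4); (k - j) + 0 * (7*k+4); (2*k + j + 2) + 1 * (7*k+4)].
Lemma P3_F2_keys (k j : nat) : 0 < k -> j < k -> keys (7*k+4) (Darcs 3) (P3_F2 k j) = [:: (1, 1, (2*k + 4) + j); (1, 0, (k + 1) + j); (1, 0, (7*k + 2) - j); (1, 0, (4*k + 1) - j); (0, 0, (4*k + 3) - j); (0, 1, (k + 2) + 2*j); (1, 1, (6*k + 3) - j)].
Proof. solve_keys. Qed.
Lemma P3_F2_ok (k j : nat) : 0 < k -> j < k -> (size (P3_F2 k j) == 7) && uniq (P3_F2 k j) && all (fun x => x < (14*k+7).+1) (P3_F2 k j).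
Proof. solve_ok. Qed.
Definition P3_F3 (k j : nat) : seq nat := [:: (2*k - j) + 0 * (7*k+4); (k) + 0 * (7*k+4); (5*k + j + 4) + 0 * (7*k+4); (0) + 0 * (7*k+4); (3*k + 1 - j) + 0 * (7*k+4); (4*k + 3) + 0 * (7*k+4); (3*k + j + 3) + 1 * (7*k+4)].
Lemma P3_F3_keys (k j : nat) : 0 < k -> j < k -> keys (7*k+4) (Darcs 3) (P3_F3 k j) = [:: (0, 0, (k) - j); (0, 0, (4*k + 4) + j); (0, 0, (5*k + 4) + j); (0, 0, (3*k + 1) - j); (0, 0, (k + 2) + j); (0, 1, (6*k + 4) + j); (1, 0, (6*k + 1) - 2*j)].
Proof. solve_keys. Qed.
Lemma P3_F3_ok (k j : nat) : 0 < k -> j < k -> (size (P3_F3 k j) == 7) && uniq (P3_F3 k j) && all (fun x => x < (14*k+7).+1) (P3_F3 k j).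
Proof. solve_ok. Qed.
Definition P3_F4 (k j : nat) : seq nat := [:: (4*k + j + 1) + 1 * (7*k+4); (7*k + 1) + 1 * (7*k+4); (3*k + j + 1) + 1 * (7*k+4); (3*k + 1) + 0 * (7*k+4); (2*k - j - 1) + 1 * (7*k+4); (3*k - 2*j) + 1 * (7*k+4); (0) + 0 * (7*k+4)].
Lemma P3_F4_keys (k j : nat) : 0 < k -> j < k -> keys (7*k+4) (Darcs 3) (P3_F4 k j) = [:: (1, 1, (4*k + 4) + j); (1, 1, (3*k + 4) + j); (0, 1, (0) + j); (0, 1, (6*k + 2) - j); (1, 1, (k + 1) - j); (1, 0, (4*k + 4) + 2*j); (0, 1, (4*k + 1) + j)].
Proof. solve_keys. Qed.
Lemma P3_F4_ok (k j : nat) : 0 < k -> j < k -> (size (P3_F4 k j) == 7) && uniq (P3_F4 k j) && all (fun x => x < (14*k+7).+1) (P3_F4 k j).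
Proof. solve_ok. Qed.
Definition P3_BL (k : nat) : seq (seq nat) := [:: P3_S1 k; P3_S2 k] ++ [seq P3_F1 k j | j <- iota 0 k] ++ [seq P3_F2 k j | j <- iota 0 k] ++ [seq P3_F3 k j | j <- iota 0 k] ++ [seq P3_F4 k j | j <- iota 0 k].
Lemma P3_F1_cnt (k : nat) (P : pred (nat * nat * nat)) : 0 < k -> count P (flatten [seq keys (7*k+4) (Darcs 3) b | b <- [seq P3_F1 k j | j <- iota 0 k]]) = count P [seq (1, 0, (2*k + 1) + j) | j <- iota 0 k] + count P [seq (1, 1, (2*k + 1) - j) | j <- iota 0 k] + count P [seq (0, 1, (k + 1) + 2*j) | j <- iota 0 k] + count P [seq (0, 1, (3*k + 1) + j) | j <- iota 0 k] + count P [seq (1, 1, (6*k + 4) + j) | j <- iota 0 k] + count P [seq (1, 0, (0) + j) | j <- iota 0 k] + count P [seq (0, 0, (6*k + 4) + j) | j <- iota 0 k].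
Proof. move=> hk; apply: famE => j; rewrite mem_iota => hj; apply: P3_F1_keys; lia. Qed.
Lemma P3_F2_cnt (k : nat) (P : pred (nat * nat * nat)) : 0 < k -> count P (flatten [seq keys (7*k+4) (Darcs 3) b | b <- [seq P3_F2 k j | j <- iota 0 k]]) = count P [seq (1, 1, (2*k + 4) + j) | j <- iota 0 k] + count P [seq (1, 0, (k + 1) + j) | j <- iota 0 k] + count P [seq (1, 0, (7*k + 2) - j) | j <- iota 0 k] + count P [seq (1, 0, (4*k + 1) - j) | j <- iota 0 k] + count P [seq (0, 0, (4*k + 3) - j) | j <- iota 0 k] + count P [seq (0, 1, (k + 2) + 2*j) | j <- iota 0 k] + count P [seq (1, 1, (6*k + 3) - j) | j <- iota 0 k].
Proof. move=> hk; apply: famE => j; rewrite mem_iota => hj; apply: P3_F2_keys; lia. Qed.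
Lemma P3_F3_cnt (k : nat) (P : pred (nat * nat * nat)) : 0 < k -> count P (flatten [seq keys (7*k+4) (Darcs 3) b | b <- [seq P3_F3 k j | j <- iota 0 k]]) = count P [seq (0, 0, (k) - j) | j <- iota 0 k] + count P [seq (0, 0, (4*k + 4) + j) | j <- iota 0 k] + count P [seq (0, 0, (5*k + 4) + j) | j <- iota 0 k] + count P [seq (0, 0, (3*k + 1) - j) | j <- iota 0 k] + count P [seq (0, 0, (k + 2) + j) | j <- iota 0 k] + count P [seq (0, 1, (6*k + 4) + j) | j <- iota 0 k] + count P [seq (1, 0, (6*k + 1) - 2*j) | j <- iota 0 k].
Proof. move=> hk; apply: famE => j; rewrite mem_iota => hj; apply: P3_F3_keys; lia. Qed.
Lemma P3_F4_cnt (k : nat) (P : pred (nat * nat * nat)) : 0 < k -> count P (flatten [seq keys (7*k+4) (Darcs 3) b | b <- [seq P3_F4 k j | j <- iota 0 k]]) = count P [seq (1, 1, (4*k + 4) + j) | j <- iota 0 k] + count P [seq (1, 1, (3*k + 4) + j) | j <- iota 0 k] + count P [seq (0, 1, (0) + j) | j <- iota 0 k] + count P [seq (0, 1, (6*k + 2) - j) | j <- iota 0 k] + count P [seq (1, 1, (k + 1) - j) | j <- iota 0 k] + count P [seq (1, 0, (4*k + 4) + 2*j) | j <- iota 0 k] + count P [seq (0, 1, (4*k + 1) + j) | j <- iota 0 k].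
Proof. move=> hk; apply: famE => j; rewrite mem_iota => hj; apply: P3_F4_keys; lia. Qed.
Lemma P3_cnt (k h1 h2 e : nat) : 0 < k -> h1 <= 1 -> h2 <= 1 -> e < 7*k+4 -> (h1 == h2 -> 0 < e) ->
  count (pred1 (h1, h2, e)) (flatten [seq keys (7*k+4) (Darcs 3) b | b <- P3_BL k]) = 1.
Proof.
move=> hk h1l h2l he hne.
rewrite /P3_BL !map_cat !flatten_cat !count_cat.
rewrite (P3_F1_cnt k _ hk) (P3_F2_cnt k _ hk) (P3_F3_cnt k _ hk) (P3_F4_cnt k _ hk).
rewrite (P3_S1_keys k hk) (P3_S2_keys k hk) /= !xpair_eqE.
rewrite !cK !cnt_incI.
rewrite (@cnt_decI (2*k + 1) k e); last by lia.
rewrite (@cnt_decI (7*k + 2) k e); last by lia.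
rewrite (@cnt_decI (4*k + 1) k e); last by lia.
rewrite (@cnt_decI (4*k + 3) k e); last by lia.
rewrite (@cnt_decI (6*k + 3) k e); last by lia.
rewrite (@cnt_decI (k) k e); last by lia.
rewrite (@cnt_decI (3*k + 1) k e); last by lia.
rewrite (@cnt_decI (6*k + 2) k e); last by lia.
rewrite (@cnt_decI (k + 1) k e); last by lia.
move/implyP: hne => hne.
case: h1 h1l hne => [|[|//]] _ hne; case: h2 h2l hne => [|[|//]] _ hne;
  rewrite /= ?mul0n ?mul1n in hne *.
- have T := @tileP e 1 [:: ((k).+1 - k, k); ((k + 1), 1); ((k + 2), k); ((3*k + 1).+1 - k, k); ((3*k + 2), 1); ((3*k + 3), 1); ((4*k + 3).+1 - k, k); ((4*k + 4), k); ((5*k + 4), k); ((6*k + 4), k)] ltac:(rewrite /=; lia) ltac:(rewrite /=; lia).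
  rewrite /= in T.  lia.
- have T := @tileP e 0 [:: ((0), k); ((k), 1); ((k + 1), 2*k); ((3*k + 1), k); ((4*k + 1), k); ((5*k + 1), 1); ((5*k + 2), 1); ((6*k + 2).+1 - k, k); ((6*k + 3), 1); ((6*k + 4), k)] ltac:(rewrite /=; lia) ltac:(rewrite /=; lia).
  rewrite /= in T. have := @dbl_ii (k + 1) (k + 1) (k + 2) k e ltac:(lia) ltac:(lia). lia.
- have T := @tileP e 0 [:: ((0), k); ((k), 1); ((k + 1), k); ((2*k + 1), k); ((3*k + 1), 1); ((4*k + 1).+1 - k, k); ((4*k + 2), 1); ((4*k + 3), 2*k); ((7*k + 2).+1 - k, k); ((7*k + 3), 1)] ltac:(rewrite /=; lia) ltac:(rewrite /=; lia).
  rewrite /= in T. have := @dbl_di (4*k + 3) (6*k + 1) (4*k + 4) k e hk ltac:(lia) ltac:(lia). lia.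
- have T := @tileP e 1 [:: ((1), 1); ((k + 1).+1 - k, k); ((2*k + 1).+1 - k, k); ((2*k + 2), 1); ((2*k + 3), 1); ((2*k + 4), k); ((3*k + 4), k); ((4*k + 4), k); ((6*k + 3).+1 - k, k); ((6*k + 4), k)] ltac:(rewrite /=; lia) ltac:(rewrite /=; lia).
  rewrite /= in T.  lia.
Qed.
Lemma P3_dec (k : nat) : 0 < k -> has_decomposition (Darcs 3) (14*k+7).+1.
Proof.
move=> hk; apply: (@main_k _ k (P3_BL k)) => //.
- rewrite /P3_BL !all_cat; apply/and5P; split.
  + by apply/and3P; split => //; [exact: (P3_S1_ok k hk) | exact: (P3_S2_ok k hk)].
  + by apply: all_fam => j hj; apply: P3_F1_ok.
  + by apply: all_fam => j hj; apply: P3_F2_ok.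
  + by apply: all_fam => j hj; apply: P3_F3_ok.
  + by apply: all_fam => j hj; apply: P3_F4_ok.
- by move=> h1 h2 e *; apply: P3_cnt.
Qed.
Lemma P3_k0 : has_decomposition (Darcs 3) (14*0+7).+1.
Proof.
apply: (@GL (Darcs 3) 7 4 [:: [:: 0; 1; 2; 4; 3; 5; 7]; [:: 4; 0; 5; 6; 7; 3; 1]]) => //.
move=> u w hu hw huw.
have H : all (fun u => all (fun w => (u == w) || (count (pred1 (key 4 u w)) (flatten [seq keys 4 (Darcs 3) b | b <- [:: [:: 0; 1; 2; 4; 3; 5; 7]; [:: 4; 0; 5; 6; 7; 3; 1]]]) == 1)) (iota 0 8)) (iota 0 8) by vm_compute.
move/allP: H => /(_ u); rewrite mem_iota => /(_ hu) /allP /(_ w); rewrite mem_iota => /(_ hw).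
by rewrite (negbTE huw) => /eqP.
Qed.

Definition P4_S1 (k : nat) : seq nat := [:: (2*k + 1) + 1 * (7*k+4); (0) + 0 * (7*k+4); (6*k + 3) + 0 * (7*k+4); (k) + 0 * (7*k+4); (5*k + 2) + 0 * (7*k+4); (k) + 1 * (7*k+4); (2*k + 2) + 0 * (7*k+4)].
Lemma P4_S1_keys (k : nat) : 0 < k -> keys (7*k+4) (Darcs 4) (P4_S1 k) = [:: (0, 1, (2*k + 1)); (0, 0, (6*k + 3)); (0, 0, (2*k + 1)); (0, 0, (3*k + 2)); (0, 1, (3*k + 2)); (1, 0, (k + 2)); (0, 1, (7*k + 3))].
Proof. solve_keys. Qed.
Lemma P4_S1_ok (k : nat) : 0 < k -> (size (P4_S1 k) == 7) && uniq (P4_S1 k) && all (fun x => x < (14*k+7).+1) (P4_S1 k).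
Proof. solve_ok. Qed.
Definition P4_S2 (k : nat) : seq nat := [:: (1) + 0 * (7*k+4); (1) + 1 * (7*k+4); (0) + 1 * (7*k+4); (4*k + 2) + 1 * (7*k+4); (3*k + 1) + 1 * (7*k+4); (3*k + 2) + 0 * (7*k+4); (5*k + 2) + 1 * (7*k+4)].
Lemma P4_S2_keys (k : nat) : 0 < k -> keys (7*k+4) (Darcs 4) (P4_S2 k) = [:: (1, 0, (0)); (1, 1, (7*k + 3)); (1, 1, (4*k + 2)); (1, 1, (k + 1)); (1, 0, (1)); (0, 1, (2*k)); (1, 0, (2*k + 3))].
Proof. solve_keys. Qed.
Lemma P4_S2_ok (k : nat) : 0 < k -> (size (P4_S2 k) == 7) && uniq (P4_S2 k) && all (fun x => x < (14*k+7).+1) (P4_S2 k).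
Proof. solve_ok. Qed.
Definition P4_F1 (k j : nat) : seq nat := [:: (k + j) + 1 * (7*k+4); (k + 2*j + 2) + 1 * (7*k+4); (3*k + j + 3) + 1 * (7*k+4); (0) + 1 * (7*k+4); (5*k + 2 - j) + 1 * (7*k+4); (4*k + 2) + 0 * (7*k+4); (k - j) + 0 * (7*k+4)].
Lemma P4_F1_keys (k j : nat) : 0 < k -> j < k -> keys (7*k+4) (Darcs 4) (P4_F1 k j) = [:: (1, 1, (7*k + 2) - j); (1, 1, (2*k + 1) - j); (1, 1, (4*k + 1) - j); (1, 1, (2*k + 2) + j); (1, 0, (6*k + 4) + j); (0, 0, (4*k + 2) - j); (0, 1, (0) + 2*j)].
Proof. solve_keys. Qed.
Lemma P4_F1_ok (k j : nat) : 0 < k -> j < k -> (size (P4_F1 k j) == 7) && uniq (P4_F1 k j) && all (fun x => x < (14*k+7).+1) (P4_F1 k j).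
Proof. solve_ok. Qed.
Definition P4_F2 (k j : nat) : seq nat := [:: (k) + 0 * (7*k+4); (4*k + j + 1) + 1 * (7*k+4); (0) + 0 * (7*k+4); (2*j + 1) + 1 * (7*k+4); (4*k + j + 2) + 0 * (7*k+4); (k + 2*j + 1) + 1 * (7*k+4); (2*k + j + 1) + 1 * (7*k+4)].
Lemma P4_F2_keys (k j : nat) : 0 < k -> j < k -> keys (7*k+4) (Darcs 4) (P4_F2 k j) = [:: (1, 0, (4*k + 3) - j); (1, 0, (3*k + 3) - j); (0, 1, (1) + 2*j); (0, 1, (3*k + 3) + j); (0, 1, (4*k + 3) + j); (1, 1, (k) - j); (1, 0, (6*k + 3) - j)].
Proof. solve_keys. Qed.
Lemma P4_F2_ok (k j : nat) : 0 < k -> j < k -> (size (P4_F2 k j) == 7) && uniq (P4_F2 k j) && all (fun x => x < (14*k+7).+1) (P4_F2 k j).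
Proof. solve_ok. Qed.
Definition P4_F3 (k j : nat) : seq nat := [:: (1) + 0 * (7*k+4); (2*k + j + 2) + 1 * (7*k+4); (k - j - 1) + 1 * (7*k+4); (k + 1) + 0 * (7*k+4); (k + j + 2) + 0 * (7*k+4); (k) + 1 * (7*k+4); (2*k + j + 3) + 0 * (7*k+4)].
Lemma P4_F3_keys (k j : nat) : 0 < k -> j < k -> keys (7*k+4) (Darcs 4) (P4_F3 k j) = [:: (1, 0, (5*k + 3) - j); (1, 1, (6*k + 1) - 2*j); (1, 0, (2) + j); (0, 0, (7*k + 3) - j); (0, 1, (7*k + 2) - j); (1, 0, (k + 3) + j); (0, 0, (5*k + 2) - j)].
Proof. solve_keys. Qed.
Lemma P4_F3_ok (k j : nat) : 0 < k -> j < k -> (size (P4_F3 k j) == 7) && uniq (P4_F3 k j) && all (fun x => x < (14*k+7).+1) (P4_F3 k j).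
Proof. solve_ok. Qed.
Definition P4_F4 (k j : nat) : seq nat := [:: (k) + 1 * (7*k+4); (3*k + 1 - j) + 0 * (7*k+4); (3*k + 2) + 0 * (7*k+4); (4*k + j + 3) + 0 * (7*k+4); (2*k + 1) + 0 * (7*k+4); (j) + 0 * (7*k+4); (2*k + 2*j + 2) + 1 * (7*k+4)].
Lemma P4_F4_keys (k j : nat) : 0 < k -> j < k -> keys (7*k+4) (Darcs 4) (P4_F4 k j) = [:: (0, 1, (5*k + 3) + j); (0, 0, (1) + j); (0, 0, (k + 1) + j); (0, 0, (2*k + 2) + j); (0, 0, (5*k + 3) + j); (0, 1, (2*k + 2) + j); (1, 1, (6*k + 2) - 2*j)].
Proof. solve_keys. Qed.
Lemma P4_F4_ok (k j : nat) : 0 < k -> j < k -> (size (P4_F4 k j) == 7) && uniq (P4_F4 k j) && all (fun x => x < (14*k+7).+1) (P4_F4 k j).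
Proof. solve_ok. Qed.
Definition P4_BL (k : nat) : seq (seq nat) := [:: P4_S1 k; P4_S2 k] ++ [seq P4_F1 k j | j <- iota 0 k] ++ [seq P4_F2 k j | j <- iota 0 k] ++ [seq P4_F3 k j | j <- iota 0 k] ++ [seq P4_F4 k j | j <- iota 0 k].
Lemma P4_F1_cnt (k : nat) (P : pred (nat * nat * nat)) : 0 < k -> count P (flatten [seq keys (7*k+4) (Darcs 4) b | b <- [seq P4_F1 k j | j <- iota 0 k]]) = count P [seq (1, 1, (7*k + 2) - j) | j <- iota 0 k] + count P [seq (1, 1, (2*k + 1) - j) | j <- iota 0 k] + count P [seq (1, 1, (4*k + 1) - j) | j <- iota 0 k] + count P [seq (1, 1, (2*k + 2) + j) | j <- iota 0 k] + count P [seq (1, 0, (6*k + 4) + j) | j <- iota 0 k] + count P [seq (0, 0, (4*k + 2) - j) | j <- iota 0 k] + count P [seq (0, 1, (0) + 2*j) | j <- iota 0 k].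
Proof. move=> hk; apply: famE => j; rewrite mem_iota => hj; apply: P4_F1_keys; lia. Qed.
Lemma P4_F2_cnt (k : nat) (P : pred (nat * nat * nat)) : 0 < k -> count P (flatten [seq keys (7*k+4) (Darcs 4) b | b <- [seq P4_F2 k j | j <- iota 0 k]]) = count P [seq (1, 0, (4*k + 3) - j) | j <- iota 0 k] + count P [seq (1, 0, (3*k + 3) - j) | j <- iota 0 k] + count P [seq (0, 1, (1) + 2*j) | j <- iota 0 k] + count P [seq (0, 1, (3*k + 3) + j) | j <- iota 0 k] + count P [seq (0, 1, (4*k + 3) + j) | j <- iota 0 k] + count P [seq (1, 1, (k) - j) | j <- iota 0 k] + count P [seq (1, 0, (6*k + 3) - j) | j <- iota 0 k].
Proof. move=> hk; apply: famE => j; rewrite mem_iota => hj; apply: P4_F2_keys; lia. Qed.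
Lemma P4_F3_cnt (k : nat) (P : pred (nat * nat * nat)) : 0 < k -> count P (flatten [seq keys (7*k+4) (Darcs 4) b | b <- [seq P4_F3 k j | j <- iota 0 k]]) = count P [seq (1, 0, (5*k + 3) - j) | j <- iota 0 k] + count P [seq (1, 1, (6*k + 1) - 2*j) | j <- iota 0 k] + count P [seq (1, 0, (2) + j) | j <- iota 0 k] + count P [seq (0, 0, (7*k + 3) - j) | j <- iota 0 k] + count P [seq (0, 1, (7*k + 2) - j) | j <- iota 0 k] + count P [seq (1, 0, (k + 3) + j) | j <- iota 0 k] + count P [seq (0, 0, (5*k + 2) - j) | j <- iota 0 k].
Proof. move=> hk; apply: famE => j; rewrite mem_iota => hj; apply: P4_F3_keys; lia. Qed.
Lemma P4_F4_cnt (k : nat) (P : pred (nat * nat * nat)) : 0 < k -> count P (flatten [seq keys (7*k+4) (Darcs 4) b | b <- [seq P4_F4 k j | j <- iota 0 k]]) = count P [seq (0, 1, (5*k + 3) + j) | j <- iota 0 k] + count P [seq (0, 0, (1) + j) | j <- iota 0 k] + count P [seq (0, 0, (k + 1) + j) | j <- iota 0 k] + count P [seq (0, 0, (2*k + 2) + j) | j <- iota 0 k] + count P [seq (0, 0, (5*k + 3) + j) | j <- iota 0 k] + count P [seq (0, 1, (2*k + 2) + j) | j <- iota 0 k] + count P [seq (1, 1, (6*k + 2) - 2*j) | j <- iota 0 k].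
Proof. move=> hk; apply: famE => j; rewrite mem_iota => hj; apply: P4_F4_keys; lia. Qed.
Lemma P4_cnt (k h1 h2 e : nat) : 0 < k -> h1 <= 1 -> h2 <= 1 -> e < 7*k+4 -> (h1 == h2 -> 0 < e) ->
  count (pred1 (h1, h2, e)) (flatten [seq keys (7*k+4) (Darcs 4) b | b <- P4_BL k]) = 1.
Proof.
move=> hk h1l h2l he hne.
rewrite /P4_BL !map_cat !flatten_cat !count_cat.
rewrite (P4_F1_cnt k _ hk) (P4_F2_cnt k _ hk) (P4_F3_cnt k _ hk) (P4_F4_cnt k _ hk).
rewrite (P4_S1_keys k hk) (P4_S2_keys k hk) /= !xpair_eqE.
rewrite !cK !cnt_incI.
rewrite (@cnt_decI (7*k + 2) k e); last by lia.
rewrite (@cnt_decI (2*k + 1) k e); last by lia.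
rewrite (@cnt_decI (4*k + 1) k e); last by lia.
rewrite (@cnt_decI (4*k + 2) k e); last by lia.
rewrite (@cnt_decI (4*k + 3) k e); last by lia.
rewrite (@cnt_decI (3*k + 3) k e); last by lia.
rewrite (@cnt_decI (k) k e); last by lia.
rewrite (@cnt_decI (6*k + 3) k e); last by lia.
rewrite (@cnt_decI (5*k + 3) k e); last by lia.
rewrite (@cnt_decI (7*k + 3) k e); last by lia.
rewrite (@cnt_decI (5*k + 2) k e); last by lia.
move/implyP: hne => hne.
case: h1 h1l hne => [|[|//]] _ hne; case: h2 h2l hne => [|[|//]] _ hne;
  rewrite /= ?mul0n ?mul1n in hne *.
- have T := @tileP e 1 [:: ((1), k); ((k + 1), k); ((2*k + 1), 1); ((2*k + 2), k); ((3*k + 2), 1); ((4*k + 2).+1 - k, k); ((5*k + 2).+1 - k, k); ((5*k + 3), k); ((6*k + 3), 1); ((7*k + 3).+1 - k, k)] ltac:(rewrite /=; lia) ltac:(rewrite /=; lia).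
  rewrite /= in T.  lia.
- have T := @tileP e 0 [:: ((0), 2*k); ((2*k), 1); ((2*k + 1), 1); ((2*k + 2), k); ((3*k + 2), 1); ((3*k + 3), k); ((4*k + 3), k); ((5*k + 3), k); ((7*k + 2).+1 - k, k); ((7*k + 3), 1)] ltac:(rewrite /=; lia) ltac:(rewrite /=; lia).
  rewrite /= in T. have := @dbl_ii (0) (0) (1) k e ltac:(lia) ltac:(lia). lia.
- have T := @tileP e 0 [:: ((0), 1); ((1), 1); ((2), k); ((k + 2), 1); ((k + 3), k); ((2*k + 3), 1); ((3*k + 3).+1 - k, k); ((4*k + 3).+1 - k, k); ((5*k + 3).+1 - k, k); ((6*k + 3).+1 - k, k); ((6*k + 4), k)] ltac:(rewrite /=; lia) ltac:(rewrite /=; lia).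
  rewrite /= in T.  lia.
- have T := @tileP e 1 [:: ((k).+1 - k, k); ((k + 1), 1); ((2*k + 1).+1 - k, k); ((2*k + 2), k); ((4*k + 1).+1 - k, k); ((4*k + 2), 1); ((4*k + 3), 2*k); ((7*k + 2).+1 - k, k); ((7*k + 3), 1)] ltac:(rewrite /=; lia) ltac:(rewrite /=; lia).
  rewrite /= in T. have := @dbl_dd (4*k + 3) (6*k + 1) (6*k + 2) k e hk ltac:(lia) ltac:(lia). lia.
Qed.
Lemma P4_dec (k : nat) : 0 < k -> has_decomposition (Darcs 4) (14*k+7).+1.
Proof.
move=> hk; apply: (@main_k _ k (P4_BL k)) => //.
- rewrite /P4_BL !all_cat; apply/and5P; split.
  + by apply/and3P; split => //; [exact: (P4_S1_ok k hk) | exact: (P4_S2_ok k hk)].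
  + by apply: all_fam => j hj; apply: P4_F1_ok.
  + by apply: all_fam => j hj; apply: P4_F2_ok.
  + by apply: all_fam => j hj; apply: P4_F3_ok.
  + by apply: all_fam => j hj; apply: P4_F4_ok.
- by move=> h1 h2 e *; apply: P4_cnt.
Qed.
Lemma P4_k0 : has_decomposition (Darcs 4) (14*0+7).+1.
Proof.
apply: (@GL (Darcs 4) 7 4 [:: [:: 0; 1; 2; 4; 3; 6; 5]; [:: 0; 2; 6; 3; 5; 7; 4]]) => //.
move=> u w hu hw huw.
have H : all (fun u => all (fun w => (u == w) || (count (pred1 (key 4 u w)) (flatten [seq keys 4 (Darcs 4) b | b <- [:: [:: 0; 1; 2; 4; 3; 6; 5]; [:: 0; 2; 6; 3; 5; 7; 4]]]) == 1)) (iota 0 8)) (iota 0 8) by vm_compute.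
move/allP: H => /(_ u); rewrite mem_iota => /(_ hu) /allP /(_ w); rewrite mem_iota => /(_ hw).
by rewrite (negbTE huw) => /eqP.
Qed.

Definition P5_S1 (k : nat) : seq nat := [:: (6*k + 2) + 1 * (7*k+4); (2*k + 1) + 0 * (7*k+4); (3*k + 2) + 0 * (7*k+4); (2*k + 2) + 1 * (7*k+4); (3*k + 4) + 0 * (7*k+4); (1) + 0 * (7*k+4); (0) + 1 * (7*k+4)].
Lemma P5_S1_keys (k : nat) : 0 < k -> keys (7*k+4) (Darcs 5) (P5_S1 k) = [:: (0, 1, (4*k + 1)); (0, 0, (6*k + 3)); (1, 0, (k)); (1, 0, (k + 2)); (0, 0, (4*k + 1)); (0, 1, (7*k + 3)); (1, 1, (6*k + 2))].
Proof. solve_keys. Qed.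
Lemma P5_S1_ok (k : nat) : 0 < k -> (size (P5_S1 k) == 7) && uniq (P5_S1 k) && all (fun x => x < (14*k+7).+1) (P5_S1 k).
Proof. solve_ok. Qed.
Definition P5_S2 (k : nat) : seq nat := [:: (5*k + 2) + 0 * (7*k+4); (4*k + 1) + 1 * (7*k+4); (0) + 1 * (7*k+4); (2*k + 2) + 0 * (7*k+4); (2*k + 2) + 1 * (7*k+4); (k + 1) + 1 * (7*k+4); (0) + 0 * (7*k+4)].
Lemma P5_S2_keys (k : nat) : 0 < k -> keys (7*k+4) (Darcs 5) (P5_S2 k) = [:: (1, 0, (k + 1)); (1, 1, (4*k + 1)); (0, 1, (5*k + 2)); (0, 1, (0)); (1, 1, (6*k + 3)); (1, 0, (6*k + 3)); (0, 0, (5*k + 2))].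
Proof. solve_keys. Qed.
Lemma P5_S2_ok (k : nat) : 0 < k -> (size (P5_S2 k) == 7) && uniq (P5_S2 k) && all (fun x => x < (14*k+7).+1) (P5_S2 k).
Proof. solve_ok. Qed.
Definition P5_F1 (k j : nat) : seq nat := [:: (j + 1) + 0 * (7*k+4); (0) + 0 * (7*k+4); (k - j) + 1 * (7*k+4); (2*k + j + 4) + 1 * (7*k+4); (3*k + 3) + 0 * (7*k+4); (4*k + j + 4) + 1 * (7*k+4); (k + 2*j + 3) + 0 * (7*k+4)].
Lemma P5_F1_keys (k j : nat) : 0 < k -> j < k -> keys (7*k+4) (Darcs 5) (P5_F1 k j) = [:: (0, 0, (1) + j); (1, 0, (6*k + 4) + j); (1, 1, (6*k) - 2*j); (1, 0, (k - 1) - j); (0, 1, (k + 1) + j); (1, 0, (4*k + 3) + j); (0, 0, (6*k + 2) - j)].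
Proof. solve_keys. Qed.
Lemma P5_F1_ok (k j : nat) : 0 < k -> j < k -> (size (P5_F1 k j) == 7) && uniq (P5_F1 k j) && all (fun x => x < (14*k+7).+1) (P5_F1 k j).
Proof. solve_ok. Qed.
Definition P5_F2 (k j : nat) : seq nat := [:: (7*k + 1 - 2*j) + 1 * (7*k+4); (5*k + 1 - j) + 1 * (7*k+4); (6*k + 3) + 0 * (7*k+4); (k + j + 2) + 0 * (7*k+4); (k + 1) + 0 * (7*k+4); (j) + 1 * (7*k+4); (k) + 1 * (7*k+4)].
Lemma P5_F2_keys (k j : nat) : 0 < k -> j < k -> keys (7*k+4) (Darcs 5) (P5_F2 k j) = [:: (1, 1, (2*k) - j); (0, 1, (6*k + 2) - j); (0, 0, (5*k + 1) - j); (0, 0, (7*k + 3) - j); (0, 1, (6*k + 3) + j); (1, 1, (k) - j); (1, 1, (6*k + 1) - 2*j)].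
Proof. solve_keys. Qed.
Lemma P5_F2_ok (k j : nat) : 0 < k -> j < k -> (size (P5_F2 k j) == 7) && uniq (P5_F2 k j) && all (fun x => x < (14*k+7).+1) (P5_F2 k j).
Proof. solve_ok. Qed.
Definition P5_F3 (k j : nat) : seq nat := [:: (k - 1) + 0 * (7*k+4); (7*k - 2*j) + 1 * (7*k+4); (4*k - j) + 1 * (7*k+4); (k) + 0 * (7*k+4); (k + j + 1) + 1 * (7*k+4); (2*j + 1) + 1 * (7*k+4); (6*k + j + 3) + 0 * (7*k+4)].
Lemma P5_F3_keys (k j : nat) : 0 < k -> j < k -> keys (7*k+4) (Darcs 5) (P5_F3 k j) = [:: (1, 0, (k + 3) + 2*j); (1, 1, (3*k) - j); (0, 1, (3*k) - j); (0, 1, (1) + j); (1, 1, (6*k + 4) + j); (1, 0, (6*k + 2) - j); (0, 0, (2*k) - j)].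
Proof. solve_keys. Qed.
Lemma P5_F3_ok (k j : nat) : 0 < k -> j < k -> (size (P5_F3 k j) == 7) && uniq (P5_F3 k j) && all (fun x => x < (14*k+7).+1) (P5_F3 k j).
Proof. solve_ok. Qed.
Definition P5_F4 (k j : nat) : seq nat := [:: (2*k - 1) + 0 * (7*k+4); (6*k - j) + 1 * (7*k+4); (2*k) + 1 * (7*k+4); (4*k + j + 3) + 0 * (7*k+4); (2*j) + 1 * (7*k+4); (3*k + 2) + 0 * (7*k+4); (6*k + j + 3) + 0 * (7*k+4)].
Lemma P5_F4_keys (k j : nat) : 0 < k -> j < k -> keys (7*k+4) (Darcs 5) (P5_F4 k j) = [:: (1, 0, (3*k + 3) + j); (1, 1, (4*k) - j); (0, 1, (5*k + 1) - j); (0, 1, (3*k + 1) + j); (1, 0, (3*k + 2) - 2*j); (0, 0, (3*k + 1) + j); (0, 0, (3*k) - j)].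
Proof. solve_keys. Qed.
Lemma P5_F4_ok (k j : nat) : 0 < k -> j < k -> (size (P5_F4 k j) == 7) && uniq (P5_F4 k j) && all (fun x => x < (14*k+7).+1) (P5_F4 k j).
Proof. solve_ok. Qed.
Definition P5_BL (k : nat) : seq (seq nat) := [:: P5_S1 k; P5_S2 k] ++ [seq P5_F1 k j | j <- iota 0 k] ++ [seq P5_F2 k j | j <- iota 0 k] ++ [seq P5_F3 k j | j <- iota 0 k] ++ [seq P5_F4 k j | j <- iota 0 k].
Lemma P5_F1_cnt (k : nat) (P : pred (nat * nat * nat)) : 0 < k -> count P (flatten [seq keys (7*k+4) (Darcs 5) b | b <- [seq P5_F1 k j | j <- iota 0 k]]) = count P [seq (0, 0, (1) + j) | j <- iota 0 k] + count P [seq (1, 0, (6*k + 4) + j) | j <- iota 0 k] + count P [seq (1, 1, (6*k) - 2*j) | j <- iota 0 k] + count P [seq (1, 0, (k - 1) - j) | j <- iota 0 k] + count P [seq (0, 1, (k + 1) + j) | j <- iota 0 k] + count P [seq (1, 0, (4*k + 3) + j) | j <- iota 0 k] + count P [seq (0, 0, (6*k + 2) - j) | j <- iota 0 k].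
Proof. move=> hk; apply: famE => j; rewrite mem_iota => hj; apply: P5_F1_keys; lia. Qed.
Lemma P5_F2_cnt (k : nat) (P : pred (nat * nat * nat)) : 0 < k -> count P (flatten [seq keys (7*k+4) (Darcs 5) b | b <- [seq P5_F2 k j | j <- iota 0 k]]) = count P [seq (1, 1, (2*k) - j) | j <- iota 0 k] + count P [seq (0, 1, (6*k + 2) - j) | j <- iota 0 k] + count P [seq (0, 0, (5*k + 1) - j) | j <- iota 0 k] + count P [seq (0, 0, (7*k + 3) - j) | j <- iota 0 k] + count P [seq (0, 1, (6*k + 3) + j) | j <- iota 0 k] + count P [seq (1, 1, (k) - j) | j <- iota 0 k] + count P [seq (1, 1, (6*k + 1) - 2*j) | j <- iota 0 k].
Proof. move=> hk; apply: famE => j; rewrite mem_iota => hj; apply: P5_F2_keys; lia. Qed.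
Lemma P5_F3_cnt (k : nat) (P : pred (nat * nat * nat)) : 0 < k -> count P (flatten [seq keys (7*k+4) (Darcs 5) b | b <- [seq P5_F3 k j | j <- iota 0 k]]) = count P [seq (1, 0, (k + 3) + 2*j) | j <- iota 0 k] + count P [seq (1, 1, (3*k) - j) | j <- iota 0 k] + count P [seq (0, 1, (3*k) - j) | j <- iota 0 k] + count P [seq (0, 1, (1) + j) | j <- iota 0 k] + count P [seq (1, 1, (6*k + 4) + j) | j <- iota 0 k] + count P [seq (1, 0, (6*k + 2) - j) | j <- iota 0 k] + count P [seq (0, 0, (2*k) - j) | j <- iota 0 k].
Proof. move=> hk; apply: famE => j; rewrite mem_iota => hj; apply: P5_F3_keys; lia. Qed.
Lemma P5_F4_cnt (k : nat) (P : pred (nat * nat * nat)) : 0 < k -> count P (flatten [seq keys (7*k+4) (Darcs 5) b | b <- [seq P5_F4 k j | j <- iota 0 k]]) = count P [seq (1, 0, (3*k + 3) + j) | j <- iota 0 k] + count P [seq (1, 1, (4*k) - j) | j <- iota 0 k] + count P [seq (0, 1, (5*k + 1) - j) | j <- iota 0 k] + count P [seq (0, 1, (3*k + 1) + j) | j <- iota 0 k] + count P [seq (1, 0, (3*k + 2) - 2*j) | j <- iota 0 k] + count P [seq (0, 0, (3*k + 1) + j) | j <- iota 0 k] + count P [seq (0, 0, (3*k) - j) | j <- iota 0 k].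
Proof. move=> hk; apply: famE => j; rewrite mem_iota => hj; apply: P5_F4_keys; lia. Qed.
Lemma P5_cnt (k h1 h2 e : nat) : 0 < k -> h1 <= 1 -> h2 <= 1 -> e < 7*k+4 -> (h1 == h2 -> 0 < e) ->
  count (pred1 (h1, h2, e)) (flatten [seq keys (7*k+4) (Darcs 5) b | b <- P5_BL k]) = 1.
Proof.
move=> hk h1l h2l he hne.
rewrite /P5_BL !map_cat !flatten_cat !count_cat.
rewrite (P5_F1_cnt k _ hk) (P5_F2_cnt k _ hk) (P5_F3_cnt k _ hk) (P5_F4_cnt k _ hk).
rewrite (P5_S1_keys k hk) (P5_S2_keys k hk) /= !xpair_eqE.
rewrite !cK !cnt_incI.
rewrite (@cnt_decI (k - 1) k e); last by lia.
rewrite (@cnt_decI (6*k + 2) k e); last by lia.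
rewrite (@cnt_decI (2*k) k e); last by lia.
rewrite (@cnt_decI (5*k + 1) k e); last by lia.
rewrite (@cnt_decI (7*k + 3) k e); last by lia.
rewrite (@cnt_decI (k) k e); last by lia.
rewrite (@cnt_decI (3*k) k e); last by lia.
rewrite (@cnt_decI (4*k) k e); last by lia.
move/implyP: hne => hne.
case: h1 h1l hne => [|[|//]] _ hne; case: h2 h2l hne => [|[|//]] _ hne;
  rewrite /= ?mul0n ?mul1n in hne *.
- have T := @tileP e 1 [:: ((1), k); ((2*k).+1 - k, k); ((3*k).+1 - k, k); ((3*k + 1), k); ((4*k + 1), 1); ((5*k + 1).+1 - k, k); ((5*k + 2), 1); ((6*k + 2).+1 - k, k); ((6*k + 3), 1); ((7*k + 3).+1 - k, k)] ltac:(rewrite /=; lia) ltac:(rewrite /=; lia).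
  rewrite /= in T.  lia.
- have T := @tileP e 0 [:: ((0), 1); ((1), k); ((k + 1), k); ((3*k).+1 - k, k); ((3*k + 1), k); ((4*k + 1), 1); ((5*k + 1).+1 - k, k); ((5*k + 2), 1); ((6*k + 2).+1 - k, k); ((6*k + 3), k); ((7*k + 3), 1)] ltac:(rewrite /=; lia) ltac:(rewrite /=; lia).
  rewrite /= in T.  lia.
- have T := @tileP e 0 [:: ((k - 1).+1 - k, k); ((k), 1); ((k + 1), 1); ((k + 2), 1); ((k + 3), 2*k); ((3*k + 3), k); ((4*k + 3), k); ((6*k + 2).+1 - k, k); ((6*k + 3), 1); ((6*k + 4), k)] ltac:(rewrite /=; lia) ltac:(rewrite /=; lia).
  rewrite /= in T. have := @dbl_id (k + 3) (k + 3) (3*k + 2) k e hk ltac:(lia) ltac:(lia). lia.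
- have T := @tileP e 1 [:: ((k).+1 - k, k); ((2*k).+1 - k, k); ((3*k).+1 - k, k); ((4*k).+1 - k, k); ((4*k + 1), 1); ((4*k + 2), 2*k); ((6*k + 2), 1); ((6*k + 3), 1); ((6*k + 4), k)] ltac:(rewrite /=; lia) ltac:(rewrite /=; lia).
  rewrite /= in T. have := @dbl_dd (4*k + 2) (6*k) (6*k + 1) k e hk ltac:(lia) ltac:(lia). lia.
Qed.
Lemma P5_dec (k : nat) : 0 < k -> has_decomposition (Darcs 5) (14*k+7).+1.
Proof.
move=> hk; apply: (@main_k _ k (P5_BL k)) => //.
- rewrite /P5_BL !all_cat; apply/and5P; split.
  + by apply/and3P; split => //; [exact: (P5_S1_ok k hk) | exact: (P5_S2_ok k hk)].
  + by apply: all_fam => j hj; apply: P5_F1_ok.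
  + by apply: all_fam => j hj; apply: P5_F2_ok.
  + by apply: all_fam => j hj; apply: P5_F3_ok.
  + by apply: all_fam => j hj; apply: P5_F4_ok.
- by move=> h1 h2 e *; apply: P5_cnt.
Qed.
Lemma P5_k0 : has_decomposition (Darcs 5) (14*0+7).+1.
Proof.
apply: (@GL (Darcs 5) 7 4 [:: [:: 0; 1; 3; 2; 4; 5; 7]; [:: 0; 5; 6; 2; 7; 1; 4]]) => //.
move=> u w hu hw huw.
have H : all (fun u => all (fun w => (u == w) || (count (pred1 (key 4 u w)) (flatten [seq keys 4 (Darcs 5) b | b <- [:: [:: 0; 1; 3; 2; 4; 5; 7]; [:: 0; 5; 6; 2; 7; 1; 4]]]) == 1)) (iota 0 8)) (iota 0 8) by vm_compute.
move/allP: H => /(_ u); rewrite mem_iota => /(_ hu) /allP /(_ w); rewrite mem_iota => /(_ hw).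
by rewrite (negbTE huw) => /eqP.
Qed.

Definition P6_S1 (k : nat) : seq nat := [:: (4*k + 3) + 1 * (7*k+4); (3*k + 2) + 1 * (7*k+4); (1) + 0 * (7*k+4); (k + 1) + 1 * (7*k+4); (0) + 1 * (7*k+4); (2*k + 2) + 0 * (7*k+4); (5*k + 4) + 0 * (7*k+4)].
Lemma P6_S1_keys (k : nat) : 0 < k -> keys (7*k+4) (Darcs 6) (P6_S1 k) = [:: (1, 1, (k + 1)); (0, 1, (3*k + 1)); (0, 1, (k)); (1, 1, (6*k + 3)); (0, 1, (5*k + 2)); (0, 0, (3*k + 2)); (0, 1, (6*k + 3))].
Proof. solve_keys. Qed.
Lemma P6_S1_ok (k : nat) : 0 < k -> (size (P6_S1 k) == 7) && uniq (P6_S1 k) && all (fun x => x < (14*k+7).+1) (P6_S1 k).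
Proof. solve_ok. Qed.
Definition P6_S2 (k : nat) : seq nat := [:: (k) + 0 * (7*k+4); (6*k + 3) + 0 * (7*k+4); (2*k + 1) + 1 * (7*k+4); (3*k + 2) + 0 * (7*k+4); (2*k + 1) + 0 * (7*k+4); (3*k + 2) + 1 * (7*k+4); (0) + 1 * (7*k+4)].
Lemma P6_S2_keys (k : nat) : 0 < k -> keys (7*k+4) (Darcs 6) (P6_S2 k) = [:: (0, 0, (2*k + 1)); (1, 0, (4*k + 2)); (1, 0, (k + 1)); (0, 0, (6*k + 3)); (1, 0, (6*k + 3)); (1, 1, (4*k + 2)); (1, 0, (k))].
Proof. solve_keys. Qed.
Lemma P6_S2_ok (k : nat) : 0 < k -> (size (P6_S2 k) == 7) && uniq (P6_S2 k) && all (fun x => x < (14*k+7).+1) (P6_S2 k).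
Proof. solve_ok. Qed.
Definition P6_F1 (k j : nat) : seq nat := [:: (4*k + j + 2) + 0 * (7*k+4); (4*k + 2) + 1 * (7*k+4); (k - j) + 1 * (7*k+4); (3*k + j + 2) + 0 * (7*k+4); (2*k) + 0 * (7*k+4); (j) + 0 * (7*k+4); (2*k + 2*j + 1) + 1 * (7*k+4)].
Lemma P6_F1_keys (k j : nat) : 0 < k -> j < k -> keys (7*k+4) (Darcs 6) (P6_F1 k j) = [:: (1, 0, (0) + j); (1, 1, (3*k + 2) + j); (1, 0, (2*k + 2) + 2*j); (0, 0, (6*k + 2) - j); (0, 0, (2*k) - j); (0, 1, (2*k + 1) + j); (1, 0, (2*k + 1) - j)].
Proof. solve_keys. Qed.
Lemma P6_F1_ok (k j : nat) : 0 < k -> j < k -> (size (P6_F1 k j) == 7) && uniq (P6_F1 k j) && all (fun x => x < (14*k+7).+1) (P6_F1 k j).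
Proof. solve_ok. Qed.
Definition P6_F2 (k j : nat) : seq nat := [:: (3*k + 1 - j) + 1 * (7*k+4); (2*k + 1) + 1 * (7*k+4); (4*k + j + 3) + 1 * (7*k+4); (k - j) + 0 * (7*k+4); (0) + 0 * (7*k+4); (3*k + 1 - j) + 0 * (7*k+4); (k) + 1 * (7*k+4)].
Lemma P6_F2_keys (k j : nat) : 0 < k -> j < k -> keys (7*k+4) (Darcs 6) (P6_F2 k j) = [:: (1, 1, (k) - j); (1, 1, (5*k + 2) - j); (1, 0, (4*k + 1) - 2*j); (0, 0, (6*k + 4) + j); (0, 0, (4*k + 3) + j); (0, 1, (5*k + 3) + j); (1, 1, (2*k + 1) - j)].
Proof. solve_keys. Qed.
Lemma P6_F2_ok (k j : nat) : 0 < k -> j < k -> (size (P6_F2 k j) == 7) && uniq (P6_F2 k j) && all (fun x => x < (14*k+7).+1) (P6_F2 k j).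
Proof. solve_ok. Qed.
Definition P6_F3 (k j : nat) : seq nat := [:: (0) + 1 * (7*k+4); (j + 1) + 0 * (7*k+4); (2*k + 2*j + 3) + 1 * (7*k+4); (k + 3*j + 3) + 1 * (7*k+4); (2*j + 1) + 1 * (7*k+4); (4*k + 3) + 0 * (7*k+4); (5*k + 2 - j) + 1 * (7*k+4)].
Lemma P6_F3_keys (k j : nat) : 0 < k -> j < k -> keys (7*k+4) (Darcs 6) (P6_F3 k j) = [:: (0, 1, (7*k + 3) - j); (1, 0, (5*k + 2) - j); (1, 1, (6*k + 4) + j); (1, 1, (6*k + 2) - j); (0, 1, (3*k + 2) + 2*j); (0, 1, (k - 1) - j); (1, 1, (2*k + 2) + j)].
Proof. solve_keys. Qed.
Lemma P6_F3_ok (k j : nat) : 0 < k -> j < k -> (size (P6_F3 k j) == 7) && uniq (P6_F3 k j) && all (fun x => x < (14*k+7).+1) (P6_F3 k j).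
Proof. solve_ok. Qed.
Definition P6_F4 (k j : nat) : seq nat := [:: (2*k + j + 2) + 0 * (7*k+4); (2*k + 1) + 0 * (7*k+4); (2*k + j + 2) + 1 * (7*k+4); (2*j + 1) + 0 * (7*k+4); (5*k + 2) + 1 * (7*k+4); (3*k + j + 2) + 0 * (7*k+4); (0) + 0 * (7*k+4)].
Lemma P6_F4_keys (k j : nat) : 0 < k -> j < k -> keys (7*k+4) (Darcs 6) (P6_F4 k j) = [:: (0, 0, (1) + j); (1, 0, (7*k + 3) - j); (1, 0, (5*k + 3) + j); (0, 1, (5*k + 1) - 2*j); (0, 1, (2*k) - j); (0, 0, (4*k + 2) - j); (0, 0, (2*k + 2) + j)].
Proof. solve_keys. Qed.
Lemma P6_F4_ok (k j : nat) : 0 < k -> j < k -> (size (P6_F4 k j) == 7) && uniq (P6_F4 k j) && all (fun x => x < (14*k+7).+1) (P6_F4 k j).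
Proof. solve_ok. Qed.
Definition P6_BL (k : nat) : seq (seq nat) := [:: P6_S1 k; P6_S2 k] ++ [seq P6_F1 k j | j <- iota 0 k] ++ [seq P6_F2 k j | j <- iota 0 k] ++ [seq P6_F3 k j | j <- iota 0 k] ++ [seq P6_F4 k j | j <- iota 0 k].
Lemma P6_F1_cnt (k : nat) (P : pred (nat * nat * nat)) : 0 < k -> count P (flatten [seq keys (7*k+4) (Darcs 6) b | b <- [seq P6_F1 k j | j <- iota 0 k]]) = count P [seq (1, 0, (0) + j) | j <- iota 0 k] + count P [seq (1, 1, (3*k + 2) + j) | j <- iota 0 k] + count P [seq (1, 0, (2*k + 2) + 2*j) | j <- iota 0 k] + count P [seq (0, 0, (6*k + 2) - j) | j <- iota 0 k] + count P [seq (0, 0, (2*k) - j) | j <- iota 0 k] + count P [seq (0, 1, (2*k + 1) + j) | j <- iota 0 k] + count P [seq (1, 0, (2*k + 1) - j) | j <- iota 0 k].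
Proof. move=> hk; apply: famE => j; rewrite mem_iota => hj; apply: P6_F1_keys; lia. Qed.
Lemma P6_F2_cnt (k : nat) (P : pred (nat * nat * nat)) : 0 < k -> count P (flatten [seq keys (7*k+4) (Darcs 6) b | b <- [seq P6_F2 k j | j <- iota 0 k]]) = count P [seq (1, 1, (k) - j) | j <- iota 0 k] + count P [seq (1, 1, (5*k + 2) - j) | j <- iota 0 k] + count P [seq (1, 0, (4*k + 1) - 2*j) | j <- iota 0 k] + count P [seq (0, 0, (6*k + 4) + j) | j <- iota 0 k] + count P [seq (0, 0, (4*k + 3) + j) | j <- iota 0 k] + count P [seq (0, 1, (5*k + 3) + j) | j <- iota 0 k] + count P [seq (1, 1, (2*k + 1) - j) | j <- iota 0 k].
Proof. move=> hk; apply: famE => j; rewrite mem_iota => hj; apply: P6_F2_keys; lia. Qed.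
Lemma P6_F3_cnt (k : nat) (P : pred (nat * nat * nat)) : 0 < k -> count P (flatten [seq keys (7*k+4) (Darcs 6) b | b <- [seq P6_F3 k j | j <- iota 0 k]]) = count P [seq (0, 1, (7*k + 3) - j) | j <- iota 0 k] + count P [seq (1, 0, (5*k + 2) - j) | j <- iota 0 k] + count P [seq (1, 1, (6*k + 4) + j) | j <- iota 0 k] + count P [seq (1, 1, (6*k + 2) - j) | j <- iota 0 k] + count P [seq (0, 1, (3*k + 2) + 2*j) | j <- iota 0 k] + count P [seq (0, 1, (k - 1) - j) | j <- iota 0 k] + count P [seq (1, 1, (2*k + 2) + j) | j <- iota 0 k].
Proof. move=> hk; apply: famE => j; rewrite mem_iota => hj; apply: P6_F3_keys; lia. Qed.
Lemma P6_F4_cnt (k : nat) (P : pred (nat * nat * nat)) : 0 < k -> count P (flatten [seq keys (7*k+4) (Darcs 6) b | b <- [seq P6_F4 k j | j <- iota 0 k]]) = count P [seq (0, 0, (1) + j) | j <- iota 0 k] + count P [seq (1, 0, (7*k + 3) - j) | j <- iota 0 k] + count P [seq (1, 0, (5*k + 3) + j) | j <- iota 0 k] + count P [seq (0, 1, (5*k + 1) - 2*j) | j <- iota 0 k] + count P [seq (0, 1, (2*k) - j) | j <- iota 0 k] + count P [seq (0, 0, (4*k + 2) - j) | j <- iota 0 k] + count P [seq (0, 0, (2*k + 2) + j) | j <- iota 0 k].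
Proof. move=> hk; apply: famE => j; rewrite mem_iota => hj; apply: P6_F4_keys; lia. Qed.
Lemma P6_cnt (k h1 h2 e : nat) : 0 < k -> h1 <= 1 -> h2 <= 1 -> e < 7*k+4 -> (h1 == h2 -> 0 < e) ->
  count (pred1 (h1, h2, e)) (flatten [seq keys (7*k+4) (Darcs 6) b | b <- P6_BL k]) = 1.
Proof.
move=> hk h1l h2l he hne.
rewrite /P6_BL !map_cat !flatten_cat !count_cat.
rewrite (P6_F1_cnt k _ hk) (P6_F2_cnt k _ hk) (P6_F3_cnt k _ hk) (P6_F4_cnt k _ hk).
rewrite (P6_S1_keys k hk) (P6_S2_keys k hk) /= !xpair_eqE.
rewrite !cK !cnt_incI.
rewrite (@cnt_decI (6*k + 2) k e); last by lia.
rewrite (@cnt_decI (2*k) k e); last by lia.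
rewrite (@cnt_decI (2*k + 1) k e); last by lia.
rewrite (@cnt_decI (k) k e); last by lia.
rewrite (@cnt_decI (5*k + 2) k e); last by lia.
rewrite (@cnt_decI (7*k + 3) k e); last by lia.
rewrite (@cnt_decI (k - 1) k e); last by lia.
rewrite (@cnt_decI (4*k + 2) k e); last by lia.
move/implyP: hne => hne.
case: h1 h1l hne => [|[|//]] _ hne; case: h2 h2l hne => [|[|//]] _ hne;
  rewrite /= ?mul0n ?mul1n in hne *.
- have T := @tileP e 1 [:: ((1), k); ((2*k).+1 - k, k); ((2*k + 1), 1); ((2*k + 2), k); ((3*k + 2), 1); ((4*k + 2).+1 - k, k); ((4*k + 3), k); ((6*k + 2).+1 - k, k); ((6*k + 3), 1); ((6*k + 4), k)] ltac:(rewrite /=; lia) ltac:(rewrite /=; lia).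
  rewrite /= in T.  lia.
- have T := @tileP e 0 [:: ((k - 1).+1 - k, k); ((k), 1); ((2*k).+1 - k, k); ((2*k + 1), k); ((3*k + 1), 1); ((3*k + 2), 2*k); ((5*k + 2), 1); ((5*k + 3), k); ((6*k + 3), 1); ((7*k + 3).+1 - k, k)] ltac:(rewrite /=; lia) ltac:(rewrite /=; lia).
  rewrite /= in T. have := @dbl_id (3*k + 2) (3*k + 2) (5*k + 1) k e hk ltac:(lia) ltac:(lia). lia.
- have T := @tileP e 0 [:: ((0), k); ((k), 1); ((k + 1), 1); ((2*k + 1).+1 - k, k); ((2*k + 2), 2*k); ((4*k + 2), 1); ((5*k + 2).+1 - k, k); ((5*k + 3), k); ((6*k + 3), 1); ((7*k + 3).+1 - k, k)] ltac:(rewrite /=; lia) ltac:(rewrite /=; lia).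
  rewrite /= in T. have := @dbl_id (2*k + 2) (2*k + 2) (4*k + 1) k e hk ltac:(lia) ltac:(lia). lia.
- have T := @tileP e 1 [:: ((k).+1 - k, k); ((k + 1), 1); ((2*k + 1).+1 - k, k); ((2*k + 2), k); ((3*k + 2), k); ((4*k + 2), 1); ((5*k + 2).+1 - k, k); ((6*k + 2).+1 - k, k); ((6*k + 3), 1); ((6*k + 4), k)] ltac:(rewrite /=; lia) ltac:(rewrite /=; lia).
  rewrite /= in T.  lia.
Qed.
Lemma P6_dec (k : nat) : 0 < k -> has_decomposition (Darcs 6) (14*k+7).+1.
Proof.
move=> hk; apply: (@main_k _ k (P6_BL k)) => //.
- rewrite /P6_BL !all_cat; apply/and5P; split.
  + by apply/and3P; split => //; [exact: (P6_S1_ok k hk) | exact: (P6_S2_ok k hk)].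
  + by apply: all_fam => j hj; apply: P6_F1_ok.
  + by apply: all_fam => j hj; apply: P6_F2_ok.
  + by apply: all_fam => j hj; apply: P6_F3_ok.
  + by apply: all_fam => j hj; apply: P6_F4_ok.
- by move=> h1 h2 e *; apply: P6_cnt.
Qed.
Lemma P6_k0 : has_decomposition (Darcs 6) (14*0+7).+1.
Proof.
apply: (@GL (Darcs 6) 7 4 [:: [:: 0; 1; 3; 4; 2; 6; 5]; [:: 4; 0; 3; 6; 7; 5; 2]]) => //.
move=> u w hu hw huw.
have H : all (fun u => all (fun w => (u == w) || (count (pred1 (key 4 u w)) (flatten [seq keys 4 (Darcs 6) b | b <- [:: [:: 0; 1; 3; 4; 2; 6; 5]; [:: 4; 0; 3; 6; 7; 5; 2]]]) == 1)) (iota 0 8)) (iota 0 8) by vm_compute.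
move/allP: H => /(_ u); rewrite mem_iota => /(_ hu) /allP /(_ w); rewrite mem_iota => /(_ hw).
by rewrite (negbTE huw) => /eqP.
Qed.

Definition P7_S1 (k : nat) : seq nat := [:: (k) + 0 * (7*k+4); (2*k + 1) + 0 * (7*k+4); (6*k + 3) + 0 * (7*k+4); (2*k + 2) + 1 * (7*k+4); (5*k + 2) + 0 * (7*k+4); (0) + 1 * (7*k+4); (k + 1) + 1 * (7*k+4)].
Lemma P7_S1_keys (k : nat) : 0 < k -> keys (7*k+4) (Darcs 7) (P7_S1 k) = [:: (0, 0, (6*k + 3)); (0, 0, (4*k + 2)); (1, 0, (4*k + 1)); (1, 0, (3*k)); (0, 1, (2*k + 2)); (1, 1, (6*k + 3)); (1, 0, (7*k + 3))].
Proof. solve_keys. Qed.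
Lemma P7_S1_ok (k : nat) : 0 < k -> (size (P7_S1 k) == 7) && uniq (P7_S1 k) && all (fun x => x < (14*k+7).+1) (P7_S1 k).
Proof. solve_ok. Qed.
Definition P7_S2 (k : nat) : seq nat := [:: (0) + 1 * (7*k+4); (0) + 0 * (7*k+4); (1) + 0 * (7*k+4); (2*k + 3) + 1 * (7*k+4); (k + 1) + 1 * (7*k+4); (k + 2) + 1 * (7*k+4); (6*k + 3) + 0 * (7*k+4)].
Lemma P7_S2_keys (k : nat) : 0 < k -> keys (7*k+4) (Darcs 7) (P7_S2 k) = [:: (0, 1, (0)); (0, 0, (1)); (1, 0, (5*k + 2)); (1, 1, (6*k + 2)); (1, 1, (1)); (0, 1, (2*k + 3)); (0, 1, (k + 1))].
Proof. solve_keys. Qed.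
Lemma P7_S2_ok (k : nat) : 0 < k -> (size (P7_S2 k) == 7) && uniq (P7_S2 k) && all (fun x => x < (14*k+7).+1) (P7_S2 k).
Proof. solve_ok. Qed.
Definition P7_F1 (k j : nat) : seq nat := [:: (2*k + j + 1) + 0 * (7*k+4); (4*k + 2*j + 4) + 1 * (7*k+4); (0) + 1 * (7*k+4); (2*k - j) + 0 * (7*k+4); (2*k - 2*j - 1) + 1 * (7*k+4); (7*k + 2 - j) + 0 * (7*k+4); (3*k + 2) + 1 * (7*k+4)].
Lemma P7_F1_keys (k j : nat) : 0 < k -> j < k -> keys (7*k+4) (Darcs 7) (P7_F1 k j) = [:: (1, 0, (5*k + 1) - j); (1, 1, (3*k) - 2*j); (0, 1, (5*k + 4) + j); (0, 1, (7*k + 3) - j); (1, 0, (5*k + 3) + j); (1, 0, (4*k) - j); (1, 0, (6*k + 3) + j)].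
Proof. solve_keys. Qed.
Lemma P7_F1_ok (k j : nat) : 0 < k -> j < k -> (size (P7_F1 k j) == 7) && uniq (P7_F1 k j) && all (fun x => x < (14*k+7).+1) (P7_F1 k j).
Proof. solve_ok. Qed.
Definition P7_F2 (k j : nat) : seq nat := [:: (7*k + 1) + 1 * (7*k+4); (3*k - j - 3) + 0 * (7*k+4); (5*k + 1) + 1 * (7*k+4); (j) + 1 * (7*k+4); (3*k + 1 - j) + 1 * (7*k+4); (2*k + 1) + 1 * (7*k+4); (2*k - j - 1) + 1 * (7*k+4)].
Lemma P7_F2_keys (k j : nat) : 0 < k -> j < k -> keys (7*k+4) (Darcs 7) (P7_F2 k j) = [:: (0, 1, (4*k + 4) + j); (0, 1, (2*k + 4) + j); (1, 1, (5*k + 1) - j); (1, 1, (3*k + 1) - 2*j); (1, 1, (6*k + 4) + j); (1, 1, (2) + j); (1, 1, (5*k + 2) + j)].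
Proof. solve_keys. Qed.
Lemma P7_F2_ok (k j : nat) : 0 < k -> j < k -> (size (P7_F2 k j) == 7) && uniq (P7_F2 k j) && all (fun x => x < (14*k+7).+1) (P7_F2 k j).
Proof. solve_ok. Qed.
Definition P7_F3 (k j : nat) : seq nat := [:: (3*k + 2*j + 2) + 0 * (7*k+4); (k) + 0 * (7*k+4); (j) + 0 * (7*k+4); (0) + 1 * (7*k+4); (3*k - j - 1) + 0 * (7*k+4); (6*k + 3) + 1 * (7*k+4); (2*k + j + 2) + 1 * (7*k+4)].
Lemma P7_F3_keys (k j : nat) : 0 < k -> j < k -> keys (7*k+4) (Darcs 7) (P7_F3 k j) = [:: (0, 0, (2*k + 2) + 2*j); (0, 0, (6*k + 4) + j); (1, 0, (0) + j); (1, 0, (3*k - 1) - j); (0, 1, (3*k + 4) + j); (1, 1, (4*k + 1) - j); (1, 0, (k) + j)].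
Proof. solve_keys. Qed.
Lemma P7_F3_ok (k j : nat) : 0 < k -> j < k -> (size (P7_F3 k j) == 7) && uniq (P7_F3 k j) && all (fun x => x < (14*k+7).+1) (P7_F3 k j).
Proof. solve_ok. Qed.
Definition P7_F4 (k j : nat) : seq nat := [:: (5*k + 2) + 0 * (7*k+4); (3*k + j + 1) + 0 * (7*k+4); (3*k + 2*j + 3) + 0 * (7*k+4); (k) + 0 * (7*k+4); (7*k + 2 - j) + 0 * (7*k+4); (k) + 1 * (7*k+4); (j) + 0 * (7*k+4)].
Lemma P7_F4_keys (k j : nat) : 0 < k -> j < k -> keys (7*k+4) (Darcs 7) (P7_F4 k j) = [:: (0, 0, (2*k + 1) - j); (0, 0, (2) + j); (0, 0, (2*k + 3) + 2*j); (0, 0, (6*k + 2) - j); (0, 1, (k + 2) + j); (0, 1, (k) - j); (0, 0, (5*k + 2) - j)].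
Proof. solve_keys. Qed.
Lemma P7_F4_ok (k j : nat) : 0 < k -> j < k -> (size (P7_F4 k j) == 7) && uniq (P7_F4 k j) && all (fun x => x < (14*k+7).+1) (P7_F4 k j).
Proof. solve_ok. Qed.
Definition P7_BL (k : nat) : seq (seq nat) := [:: P7_S1 k; P7_S2 k] ++ [seq P7_F1 k j | j <- iota 0 k] ++ [seq P7_F2 k j | j <- iota 0 k] ++ [seq P7_F3 k j | j <- iota 0 k] ++ [seq P7_F4 k j | j <- iota 0 k].
Lemma P7_F1_cnt (k : nat) (P : pred (nat * nat * nat)) : 0 < k -> count P (flatten [seq keys (7*k+4) (Darcs 7) b | b <- [seq P7_F1 k j | j <- iota 0 k]]) = count P [seq (1, 0, (5*k + 1) - j) | j <- iota 0 k] + count P [seq (1, 1, (3*k) - 2*j) | j <- iota 0 k] + count P [seq (0, 1, (5*k + 4) + j) | j <- iota 0 k] + count P [seq (0, 1, (7*k + 3) - j) | j <- iota 0 k] + count P [seq (1, 0, (5*k + 3) + j) | j <- iota 0 k] + count P [seq (1, 0, (4*k) - j) | j <- iota 0 k] + count P [seq (1, 0, (6*k + 3) + j) | j <- iota 0 k].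
Proof. move=> hk; apply: famE => j; rewrite mem_iota => hj; apply: P7_F1_keys; lia. Qed.
Lemma P7_F2_cnt (k : nat) (P : pred (nat * nat * nat)) : 0 < k -> count P (flatten [seq keys (7*k+4) (Darcs 7) b | b <- [seq P7_F2 k j | j <- iota 0 k]]) = count P [seq (0, 1, (4*k + 4) + j) | j <- iota 0 k] + count P [seq (0, 1, (2*k + 4) + j) | j <- iota 0 k] + count P [seq (1, 1, (5*k + 1) - j) | j <- iota 0 k] + count P [seq (1, 1, (3*k + 1) - 2*j) | j <- iota 0 k] + count P [seq (1, 1, (6*k + 4) + j) | j <- iota 0 k] + count P [seq (1, 1, (2) + j) | j <- iota 0 k] + count P [seq (1, 1, (5*k + 2) + j) | j <- iota 0 k].
Proof. move=> hk; apply: famE => j; rewrite mem_iota => hj; apply: P7_F2_keys; lia. Qed.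
Lemma P7_F3_cnt (k : nat) (P : pred (nat * nat * nat)) : 0 < k -> count P (flatten [seq keys (7*k+4) (Darcs 7) b | b <- [seq P7_F3 k j | j <- iota 0 k]]) = count P [seq (0, 0, (2*k + 2) + 2*j) | j <- iota 0 k] + count P [seq (0, 0, (6*k + 4) + j) | j <- iota 0 k] + count P [seq (1, 0, (0) + j) | j <- iota 0 k] + count P [seq (1, 0, (3*k - 1) - j) | j <- iota 0 k] + count P [seq (0, 1, (3*k + 4) + j) | j <- iota 0 k] + count P [seq (1, 1, (4*k + 1) - j) | j <- iota 0 k] + count P [seq (1, 0, (k) + j) | j <- iota 0 k].
Proof. move=> hk; apply: famE => j; rewrite mem_iota => hj; apply: P7_F3_keys; lia. Qed.
Lemma P7_F4_cnt (k : nat) (P : pred (nat * nat * nat)) : 0 < k -> count P (flatten [seq keys (7*k+4) (Darcs 7) b | b <- [seq P7_F4 k j | j <- iota 0 k]]) = count P [seq (0, 0, (2*k + 1) - j) | j <- iota 0 k] + count P [seq (0, 0, (2) + j) | j <- iota 0 k] + count P [seq (0, 0, (2*k + 3) + 2*j) | j <- iota 0 k] + count P [seq (0, 0, (6*k + 2) - j) | j <- iota 0 k] + count P [seq (0, 1, (k + 2) + j) | j <- iota 0 k] + count P [seq (0, 1, (k) - j) | j <- iota 0 k] + count P [seq (0, 0, (5*k + 2) - j) | j <- iota 0 k].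
Proof. move=> hk; apply: famE => j; rewrite mem_iota => hj; apply: P7_F4_keys; lia. Qed.
Lemma P7_cnt (k h1 h2 e : nat) : 0 < k -> h1 <= 1 -> h2 <= 1 -> e < 7*k+4 -> (h1 == h2 -> 0 < e) ->
  count (pred1 (h1, h2, e)) (flatten [seq keys (7*k+4) (Darcs 7) b | b <- P7_BL k]) = 1.
Proof.
move=> hk h1l h2l he hne.
rewrite /P7_BL !map_cat !flatten_cat !count_cat.
rewrite (P7_F1_cnt k _ hk) (P7_F2_cnt k _ hk) (P7_F3_cnt k _ hk) (P7_F4_cnt k _ hk).
rewrite (P7_S1_keys k hk) (P7_S2_keys k hk) /= !xpair_eqE.
rewrite !cK !cnt_incI.
rewrite (@cnt_decI (5*k + 1) k e); last by lia.
rewrite (@cnt_decI (7*k + 3) k e); last by lia.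
rewrite (@cnt_decI (4*k) k e); last by lia.
rewrite (@cnt_decI (3*k - 1) k e); last by lia.
rewrite (@cnt_decI (4*k + 1) k e); last by lia.
rewrite (@cnt_decI (2*k + 1) k e); last by lia.
rewrite (@cnt_decI (6*k + 2) k e); last by lia.
rewrite (@cnt_decI (k) k e); last by lia.
rewrite (@cnt_decI (5*k + 2) k e); last by lia.
move/implyP: hne => hne.
case: h1 h1l hne => [|[|//]] _ hne; case: h2 h2l hne => [|[|//]] _ hne;
  rewrite /= ?mul0n ?mul1n in hne *.
- have T := @tileP e 1 [:: ((1), 1); ((2), k); ((2*k + 1).+1 - k, k); ((2*k + 2), 2*k); ((4*k + 2), 1); ((5*k + 2).+1 - k, k); ((6*k + 2).+1 - k, k); ((6*k + 3), 1); ((6*k + 4), k)] ltac:(rewrite /=; lia) ltac:(rewrite /=; lia).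
  rewrite /= in T. have := @dbl_ii (2*k + 2) (2*k + 2) (2*k + 3) k e ltac:(lia) ltac:(lia). lia.
- have T := @tileP e 0 [:: ((0), 1); ((k).+1 - k, k); ((k + 1), 1); ((k + 2), k); ((2*k + 2), 1); ((2*k + 3), 1); ((2*k + 4), k); ((3*k + 4), k); ((4*k + 4), k); ((5*k + 4), k); ((7*k + 3).+1 - k, k)] ltac:(rewrite /=; lia) ltac:(rewrite /=; lia).
  rewrite /= in T.  lia.
- have T := @tileP e 0 [:: ((0), k); ((k), k); ((3*k - 1).+1 - k, k); ((3*k), 1); ((4*k).+1 - k, k); ((4*k + 1), 1); ((5*k + 1).+1 - k, k); ((5*k + 2), 1); ((5*k + 3), k); ((6*k + 3), k); ((7*k + 3), 1)] ltac:(rewrite /=; lia) ltac:(rewrite /=; lia).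
  rewrite /= in T.  lia.
- have T := @tileP e 1 [:: ((1), 1); ((2), k); ((k + 2), 2*k); ((4*k + 1).+1 - k, k); ((5*k + 1).+1 - k, k); ((5*k + 2), k); ((6*k + 2), 1); ((6*k + 3), 1); ((6*k + 4), k)] ltac:(rewrite /=; lia) ltac:(rewrite /=; lia).
  rewrite /= in T. have := @dbl_dd (k + 2) (3*k) (3*k + 1) k e hk ltac:(lia) ltac:(lia). lia.
Qed.
Lemma P7_dec (k : nat) : 0 < k -> has_decomposition (Darcs 7) (14*k+7).+1.
Proof.
move=> hk; apply: (@main_k _ k (P7_BL k)) => //.
- rewrite /P7_BL !all_cat; apply/and5P; split.
  + by apply/and3P; split => //; [exact: (P7_S1_ok k hk) | exact: (P7_S2_ok k hk)].
  + by apply: all_fam => j hj; apply: P7_F1_ok.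
  + by apply: all_fam => j hj; apply: P7_F2_ok.
  + by apply: all_fam => j hj; apply: P7_F3_ok.
  + by apply: all_fam => j hj; apply: P7_F4_ok.
- by move=> h1 h2 e *; apply: P7_cnt.
Qed.
Lemma P7_k0 : has_decomposition (Darcs 7) (14*0+7).+1.
Proof.
apply: (@GL (Darcs 7) 7 4 [:: [:: 0; 1; 2; 4; 3; 5; 7]; [:: 0; 2; 5; 1; 6; 7; 4]]) => //.
move=> u w hu hw huw.
have H : all (fun u => all (fun w => (u == w) || (count (pred1 (key 4 u w)) (flatten [seq keys 4 (Darcs 7) b | b <- [:: [:: 0; 1; 2; 4; 3; 5; 7]; [:: 0; 2; 5; 1; 6; 7; 4]]]) == 1)) (iota 0 8)) (iota 0 8) by vm_compute.
move/allP: H => /(_ u); rewrite mem_iota => /(_ hu) /allP /(_ w); rewrite mem_iota => /(_ hw).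
by rewrite (negbTE huw) => /eqP.
Qed.

Definition P8_S1 (k : nat) : seq nat := [:: (0) + 1 * (7*k+4); (5*k + 3) + 1 * (7*k+4); (4*k + 2) + 0 * (7*k+4); (k + 1) + 1 * (7*k+4); (k + 1) + 0 * (7*k+4); (0) + 0 * (7*k+4); (k + 2) + 1 * (7*k+4)].
Lemma P8_S1_keys (k : nat) : 0 < k -> keys (7*k+4) (Darcs 8) (P8_S1 k) = [:: (1, 1, (2*k + 1)); (0, 1, (k + 1)); (0, 1, (4*k + 3)); (0, 1, (0)); (0, 0, (6*k + 3)); (0, 1, (k + 2)); (1, 1, (6*k + 2))].
Proof. solve_keys. Qed.
Lemma P8_S1_ok (k : nat) : 0 < k -> (size (P8_S1 k) == 7) && uniq (P8_S1 k) && all (fun x => x < (14*k+7).+1) (P8_S1 k).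
Proof. solve_ok. Qed.
Definition P8_S2 (k : nat) : seq nat := [:: (3*k + 2) + 0 * (7*k+4); (k + 1) + 1 * (7*k+4); (2*k + 2) + 1 * (7*k+4); (1) + 0 * (7*k+4); (2*k + 3) + 1 * (7*k+4); (4*k + 3) + 0 * (7*k+4); (0) + 0 * (7*k+4)].
Lemma P8_S2_keys (k : nat) : 0 < k -> keys (7*k+4) (Darcs 8) (P8_S2 k) = [:: (1, 0, (2*k + 1)); (1, 1, (6*k + 3)); (1, 0, (5*k + 3)); (1, 0, (5*k + 2)); (1, 0, (2*k)); (0, 0, (3*k + 1)); (0, 0, (3*k + 2))].
Proof. solve_keys. Qed.
Lemma P8_S2_ok (k : nat) : 0 < k -> (size (P8_S2 k) == 7) && uniq (P8_S2 k) && all (fun x => x < (14*k+7).+1) (P8_S2 k).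
Proof. solve_ok. Qed.
Definition P8_F1 (k j : nat) : seq nat := [:: (2*k - j - 1) + 1 * (7*k+4); (2*k) + 0 * (7*k+4); (4*k + 1 - j) + 0 * (7*k+4); (5*k + 4) + 1 * (7*k+4); (2*k + j + 2) + 0 * (7*k+4); (0) + 0 * (7*k+4); (3*k + j + 3) + 1 * (7*k+4)].
Lemma P8_F1_keys (k j : nat) : 0 < k -> j < k -> keys (7*k+4) (Darcs 8) (P8_F1 k j) = [:: (0, 1, (7*k + 3) - j); (0, 0, (5*k + 3) + j); (0, 1, (k + 3) + j); (0, 1, (3*k + 2) - j); (0, 0, (5*k + 2) - j); (0, 1, (3*k + 3) + j); (1, 1, (6*k) - 2*j)].
Proof. solve_keys. Qed.
Lemma P8_F1_ok (k j : nat) : 0 < k -> j < k -> (size (P8_F1 k j) == 7) && uniq (P8_F1 k j) && all (fun x => x < (14*k+7).+1) (P8_F1 k j).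
Proof. solve_ok. Qed.
Definition P8_F2 (k j : nat) : seq nat := [:: (3*k) + 1 * (7*k+4); (6*k + 1 - 2*j) + 1 * (7*k+4); (5*k + 1 - j) + 1 * (7*k+4); (4*k + 1) + 1 * (7*k+4); (j) + 1 * (7*k+4); (k - 1) + 0 * (7*k+4); (k + j) + 1 * (7*k+4)].
Lemma P8_F2_keys (k j : nat) : 0 < k -> j < k -> keys (7*k+4) (Darcs 8) (P8_F2 k j) = [:: (1, 1, (4*k + 3) + 2*j); (1, 1, (k) - j); (1, 1, (6*k + 4) + j); (1, 1, (4*k + 1) - j); (1, 0, (k - 1) - j); (0, 1, (1) + j); (1, 1, (2*k) - j)].
Proof. solve_keys. Qed.
Lemma P8_F2_ok (k j : nat) : 0 < k -> j < k -> (size (P8_F2 k j) == 7) && uniq (P8_F2 k j) && all (fun x => x < (14*k+7).+1) (P8_F2 k j).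
Proof. solve_ok. Qed.
Definition P8_F3 (k j : nat) : seq nat := [:: (j) + 0 * (7*k+4); (6*k + 3) + 0 * (7*k+4); (j) + 1 * (7*k+4); (3*k + 1) + 0 * (7*k+4); (2*k + 1 - j) + 1 * (7*k+4); (4*k + 3) + 1 * (7*k+4); (2*j + 1) + 0 * (7*k+4)].
Lemma P8_F3_keys (k j : nat) : 0 < k -> j < k -> keys (7*k+4) (Darcs 8) (P8_F3 k j) = [:: (0, 0, (k + 1) + j); (1, 0, (6*k + 3) - j); (1, 0, (3*k + 1) - j); (1, 0, (k) + j); (1, 1, (2*k + 2) + j); (1, 0, (3*k + 2) + 2*j); (0, 0, (7*k + 3) - j)].
Proof. solve_keys. Qed.
Lemma P8_F3_ok (k j : nat) : 0 < k -> j < k -> (size (P8_F3 k j) == 7) && uniq (P8_F3 k j) && all (fun x => x < (14*k+7).+1) (P8_F3 k j).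
Proof. solve_ok. Qed.
Definition P8_F4 (k j : nat) : seq nat := [:: (5*k + 2*j + 4) + 1 * (7*k+4); (j) + 0 * (7*k+4); (4*k + 1 - j) + 1 * (7*k+4); (4*k - 2*j) + 0 * (7*k+4); (3*k - j) + 0 * (7*k+4); (5*k + 1) + 0 * (7*k+4); (k + j) + 0 * (7*k+4)].
Lemma P8_F4_keys (k j : nat) : 0 < k -> j < k -> keys (7*k+4) (Darcs 8) (P8_F4 k j) = [:: (0, 1, (5*k + 4) + j); (1, 0, (3*k + 3) + 2*j); (1, 0, (7*k + 3) - j); (0, 0, (k) - j); (0, 0, (2*k + 1) + j); (0, 0, (3*k + 3) + j); (0, 1, (4*k + 4) + j)].
Proof. solve_keys. Qed.
Lemma P8_F4_ok (k j : nat) : 0 < k -> j < k -> (size (P8_F4 k j) == 7) && uniq (P8_F4 k j) && all (fun x => x < (14*k+7).+1) (P8_F4 k j).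
Proof. solve_ok. Qed.
Definition P8_BL (k : nat) : seq (seq nat) := [:: P8_S1 k; P8_S2 k] ++ [seq P8_F1 k j | j <- iota 0 k] ++ [seq P8_F2 k j | j <- iota 0 k] ++ [seq P8_F3 k j | j <- iota 0 k] ++ [seq P8_F4 k j | j <- iota 0 k].
Lemma P8_F1_cnt (k : nat) (P : pred (nat * nat * nat)) : 0 < k -> count P (flatten [seq keys (7*k+4) (Darcs 8) b | b <- [seq P8_F1 k j | j <- iota 0 k]]) = count P [seq (0, 1, (7*k + 3) - j) | j <- iota 0 k] + count P [seq (0, 0, (5*k + 3) + j) | j <- iota 0 k] + count P [seq (0, 1, (k + 3) + j) | j <- iota 0 k] + count P [seq (0, 1, (3*k + 2) - j) | j <- iota 0 k] + count P [seq (0, 0, (5*k + 2) - j) | j <- iota 0 k] + count P [seq (0, 1, (3*k + 3) + j) | j <- iota 0 k] + count P [seq (1, 1, (6*k) - 2*j) | j <- iota 0 k].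
Proof. move=> hk; apply: famE => j; rewrite mem_iota => hj; apply: P8_F1_keys; lia. Qed.
Lemma P8_F2_cnt (k : nat) (P : pred (nat * nat * nat)) : 0 < k -> count P (flatten [seq keys (7*k+4) (Darcs 8) b | b <- [seq P8_F2 k j | j <- iota 0 k]]) = count P [seq (1, 1, (4*k + 3) + 2*j) | j <- iota 0 k] + count P [seq (1, 1, (k) - j) | j <- iota 0 k] + count P [seq (1, 1, (6*k + 4) + j) | j <- iota 0 k] + count P [seq (1, 1, (4*k + 1) - j) | j <- iota 0 k] + count P [seq (1, 0, (k - 1) - j) | j <- iota 0 k] + count P [seq (0, 1, (1) + j) | j <- iota 0 k] + count P [seq (1, 1, (2*k) - j) | j <- iota 0 k].
Proof. move=> hk; apply: famE => j; rewrite mem_iota => hj; apply: P8_F2_keys; lia. Qed.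
Lemma P8_F3_cnt (k : nat) (P : pred (nat * nat * nat)) : 0 < k -> count P (flatten [seq keys (7*k+4) (Darcs 8) b | b <- [seq P8_F3 k j | j <- iota 0 k]]) = count P [seq (0, 0, (k + 1) + j) | j <- iota 0 k] + count P [seq (1, 0, (6*k + 3) - j) | j <- iota 0 k] + count P [seq (1, 0, (3*k + 1) - j) | j <- iota 0 k] + count P [seq (1, 0, (k) + j) | j <- iota 0 k] + count P [seq (1, 1, (2*k + 2) + j) | j <- iota 0 k] + count P [seq (1, 0, (3*k + 2) + 2*j) | j <- iota 0 k] + count P [seq (0, 0, (7*k + 3) - j) | j <- iota 0 k].
Proof. move=> hk; apply: famE => j; rewrite mem_iota => hj; apply: P8_F3_keys; lia. Qed.
Lemma P8_F4_cnt (k : nat) (P : pred (nat * nat * nat)) : 0 < k -> count P (flatten [seq keys (7*k+4) (Darcs 8) b | b <- [seq P8_F4 k j | j <- iota 0 k]]) = count P [seq (0, 1, (5*k + 4) + j) | j <- iota 0 k] + count P [seq (1, 0, (3*k + 3) + 2*j) | j <- iota 0 k] + count P [seq (1, 0, (7*k + 3) - j) | j <- iota 0 k] + count P [seq (0, 0, (k) - j) | j <- iota 0 k] + count P [seq (0, 0, (2*k + 1) + j) | j <- iota 0 k] + count P [seq (0, 0, (3*k + 3) + j) | j <- iota 0 k] + count P [seq (0, 1, (4*k + 4) + j) | j <- iota 0 k].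
Proof. move=> hk; apply: famE => j; rewrite mem_iota => hj; apply: P8_F4_keys; lia. Qed.
Lemma P8_cnt (k h1 h2 e : nat) : 0 < k -> h1 <= 1 -> h2 <= 1 -> e < 7*k+4 -> (h1 == h2 -> 0 < e) ->
  count (pred1 (h1, h2, e)) (flatten [seq keys (7*k+4) (Darcs 8) b | b <- P8_BL k]) = 1.
Proof.
move=> hk h1l h2l he hne.
rewrite /P8_BL !map_cat !flatten_cat !count_cat.
rewrite (P8_F1_cnt k _ hk) (P8_F2_cnt k _ hk) (P8_F3_cnt k _ hk) (P8_F4_cnt k _ hk).
rewrite (P8_S1_keys k hk) (P8_S2_keys k hk) /= !xpair_eqE.
rewrite !cK !cnt_incI.
rewrite (@cnt_decI (7*k + 3) k e); last by lia.
rewrite (@cnt_decI (3*k + 2) k e); last by lia.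
rewrite (@cnt_decI (5*k + 2) k e); last by lia.
rewrite (@cnt_decI (k) k e); last by lia.
rewrite (@cnt_decI (4*k + 1) k e); last by lia.
rewrite (@cnt_decI (k - 1) k e); last by lia.
rewrite (@cnt_decI (2*k) k e); last by lia.
rewrite (@cnt_decI (6*k + 3) k e); last by lia.
rewrite (@cnt_decI (3*k + 1) k e); last by lia.
move/implyP: hne => hne.
case: h1 h1l hne => [|[|//]] _ hne; case: h2 h2l hne => [|[|//]] _ hne;
  rewrite /= ?mul0n ?mul1n in hne *.
- have T := @tileP e 1 [:: ((k).+1 - k, k); ((k + 1), k); ((2*k + 1), k); ((3*k + 1), 1); ((3*k + 2), 1); ((3*k + 3), k); ((5*k + 2).+1 - k, k); ((5*k + 3), k); ((6*k + 3), 1); ((7*k + 3).+1 - k, k)] ltac:(rewrite /=; lia) ltac:(rewrite /=; lia).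
  rewrite /= in T.  lia.
- have T := @tileP e 0 [:: ((0), 1); ((1), k); ((k + 1), 1); ((k + 2), 1); ((k + 3), k); ((3*k + 2).+1 - k, k); ((3*k + 3), k); ((4*k + 3), 1); ((4*k + 4), k); ((5*k + 4), k); ((7*k + 3).+1 - k, k)] ltac:(rewrite /=; lia) ltac:(rewrite /=; lia).
  rewrite /= in T.  lia.
- have T := @tileP e 0 [:: ((k - 1).+1 - k, k); ((k), k); ((2*k), 1); ((2*k + 1), 1); ((3*k + 1).+1 - k, k); ((3*k + 2), 2*k); ((5*k + 2), 1); ((5*k + 3), 1); ((6*k + 3).+1 - k, k); ((7*k + 3).+1 - k, k)] ltac:(rewrite /=; lia) ltac:(rewrite /=; lia).
  rewrite /= in T. have := @dbl_ii (3*k + 2) (3*k + 2) (3*k + 3) k e ltac:(lia) ltac:(lia). lia.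
- have T := @tileP e 1 [:: ((k).+1 - k, k); ((2*k).+1 - k, k); ((2*k + 1), 1); ((2*k + 2), k); ((4*k + 1).+1 - k, k); ((4*k + 2), 2*k); ((6*k + 2), 1); ((6*k + 3), 1); ((6*k + 4), k)] ltac:(rewrite /=; lia) ltac:(rewrite /=; lia).
  rewrite /= in T. have := @dbl_di (4*k + 2) (6*k) (4*k + 3) k e hk ltac:(lia) ltac:(lia). lia.
Qed.
Lemma P8_dec (k : nat) : 0 < k -> has_decomposition (Darcs 8) (14*k+7).+1.
Proof.
move=> hk; apply: (@main_k _ k (P8_BL k)) => //.
- rewrite /P8_BL !all_cat; apply/and5P; split.
  + by apply/and3P; split => //; [exact: (P8_S1_ok k hk) | exact: (P8_S2_ok k hk)].
  + by apply: all_fam => j hj; apply: P8_F1_ok.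
  + by apply: all_fam => j hj; apply: P8_F2_ok.
  + by apply: all_fam => j hj; apply: P8_F3_ok.
  + by apply: all_fam => j hj; apply: P8_F4_ok.
- by move=> h1 h2 e *; apply: P8_cnt.
Qed.
Lemma P8_k0 : has_decomposition (Darcs 8) (14*0+7).+1.
Proof.
apply: (@GL (Darcs 8) 7 4 [:: [:: 0; 1; 3; 4; 2; 5; 6]; [:: 0; 3; 7; 6; 4; 1; 5]]) => //.
move=> u w hu hw huw.
have H : all (fun u => all (fun w => (u == w) || (count (pred1 (key 4 u w)) (flatten [seq keys 4 (Darcs 8) b | b <- [:: [:: 0; 1; 3; 4; 2; 5; 6]; [:: 0; 3; 7; 6; 4; 1; 5]]]) == 1)) (iota 0 8)) (iota 0 8) by vm_compute.
move/allP: H => /(_ u); rewrite mem_iota => /(_ hu) /allP /(_ w); rewrite mem_iota => /(_ hw).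
by rewrite (negbTE huw) => /eqP.
Qed.


Theorem lemma3p6 (i : nat) (hi : 1 <= i <= 8) (v : nat) (hv : 0 < v)
  (hmod : v = 8 %[mod 14]) :
  has_decomposition (Darcs i) v.
Proof.
have [k ->] : exists k, v = (14*k+7).+1.
  exists (v %/ 14); move: hmod; rewrite (modn_small (_ : 8 < 14)) // => hmod.
  by rewrite {1}(divn_eq v 14) hmod; lia.
case: k => [|k].
- case: i hi => [|[|[|[|[|[|[|[|[|i]]]]]]]]] // _; [exact: P1_k0 | exact: P2_k0 | exact: P3_k0 | exact: P4_k0 | exact: P5_k0 | exact: P6_k0 | exact: P7_k0 | exact: P8_k0].
- have hk : 0 < k.+1 by [].
  case: i hi => [|[|[|[|[|[|[|[|[|i]]]]]]]]] // _; [exact: (P1_dec _ hk) | exact: (P2_dec _ hk) | exact: (P3_dec _ hk) | exact: (P4_dec _ hk) | exact: (P5_dec _ hk) | exact: (P6_dec _ hk) | exact: (P7_dec _ hk) | exact: (P8_dec _ hk)].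
Qed.
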